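(* Let $\mathcal A$ be a $\mathcal{SHIQ}$-Abox (with all concepts in negation normal form) and $\mathcal R$ a role hierarchy. If $\mathcal A$ has a tableau w.r.t. $\mathcal R$, then the expansion rules of the completion algorithm can be applied to $\mathcal A$ and $\mathcal R$ such that they yield a complete and clash-free completion forest.
   Context: $\mathcal{SHIQ}$: roles are role names and inverses $R^-$ ($\mathrm{Inv}(R)=R^-$, $\mathrm{Inv}(S^-)=S$); some role names are transitive, $\mathrm{Trans}(R)$ iff $R$ or $\mathrm{Inv}(R)$ is a transitive role name. A role hierarchy $\mathcal R$ is a set of role inclusions $R\sqsubseteq S$; $\sqsubseteq^*$ is the reflexive-transitive closure of $\sqsubseteq$ over $\mathcal R\cup\{\mathrm{Inv}(R)\sqsubseteq\mathrm{Inv}(S)\mid R\sqsubseteq S\in\mathcal R\}$; a role is simple if neither transitive nor having a transitive sub-role. Concepts: concept names, $\sqcap,\sqcup,\neg$, $\forall R.C$, $\exists R.C$, $(\geqslant n\,S\,C)$, $(\leqslant n\,S\,C)$ ($S$ simple). An Abox is a finite set of assertions $a:C$, $(a,b):R$, $a\not\doteq b$. NNF: negation only before concept names; $\sim C$ is the NNF of $\neg C$ (with $\neg(\leqslant n\,R\,C)\equiv(\geqslant(n{+}1)\,R\,C)$, $\neg(\geqslant n\,R\,C)\equiv(\leqslant(n{-}1)\,R\,C)$, $(\leqslant(-1)\,R\,C):=A\sqcap\neg A$). $\mathsf{clos}(\mathcal A)$ is the union over $a:C\in\mathcal A$ of the smallest set containing $C$ closed under subconcepts and $\sim$. $\mathbf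 R_{\mathcal A}$: roles in $\mathcal A$ and $\mathcal R$ with their inverses; $\mathbf I_{\mathcal A}$: individuals in $\mathcal A$. Tableau: $T=(\mathbf S,\mathcal L,\mathcal E,\mathcal I)$ is a tableau for $\mathcal A$ w.r.t. $\mathcal R$ iff $\mathbf S\neq\emptyset$, $\mathcal L:\mathbf S\to2^{\mathsf{clos}(\mathcal A)}$, $\mathcal E:\mathbf R_{\mathcal A}\to2^{\mathbf S\times\mathbf S}$, $\mathcal I:\mathbf I_{\mathcal A}\to\mathbf S$, and for all $s,t\in\mathbf S$, $C,C_1,C_2\in\mathsf{clos}(\mathcal A)$, $R,S\in\mathbf R_{\mathcal A}$: (P1) $C\in\mathcal L(s)\Rightarrow\neg C\notin\mathcal L(s)$; (P2) $C_1\sqcap C_2\in\mathcal L(s)\Rightarrow C_1,C_2\in\mathcal L(s)$; (P3) $C_1\sqcup C_2\in\mathcal L(s)\Rightarrow C_1\in\mathcal L(s)$ or $C_2\in\mathcal L(s)$; (P4) $\forall S.C\in\mathcal L(s)$, $(s,t)\in\mathcal E(S)\Rightarrow C\in\mathcal L(t)$; (P5) $\exists S.C\in\mathcal L(s)\Rightarrow$ some $t$ with $(s,t)\in\mathcal E(S)$, $C\in\mathcal L(t)$; (P6) $\forall S.C\in\mathcal L(s)$, $(s,t)\in\mathcal E(R)$, $R\sqsubseteq^*S$, $\mathrm{Trans}(R)\Rightarrow\forall R.C\in\mathcal L(t)$; (P7) $(s,t)\in\mathcal E(R)$ iff $(t,s)\in\mathcal E(\mathrm{Inv}(R))$; (P8)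 $(s,t)\in\mathcal E(R)$, $R\sqsubseteq^*S\Rightarrow(s,t)\in\mathcal E(S)$; (P9) $(\leqslant n\,S\,C)\in\mathcal L(s)\Rightarrow\#S^T(s,C)\le n$; (P10) $(\geqslant n\,S\,C)\in\mathcal L(s)\Rightarrow\#S^T(s,C)\ge n$; (P11) $(\bowtie n\,S\,C)\in\mathcal L(s)$ ($\bowtie\in\{\leqslant,\geqslant\}$), $(s,t)\in\mathcal E(S)\Rightarrow C\in\mathcal L(t)$ or $\sim C\in\mathcal L(t)$; (P12) $a:C\in\mathcal A\Rightarrow C\in\mathcal L(\mathcal I(a))$; (P13) $(a,b):R\in\mathcal A\Rightarrow(\mathcal I(a),\mathcal I(b))\in\mathcal E(R)$; (P14) $a\not\doteq b\in\mathcal A\Rightarrow\mathcal I(a)\neq\mathcal I(b)$; where $S^T(s,C)=\{t\mid(s,t)\in\mathcal E(S), C\in\mathcal L(t)\}$. Completion forest: a collection of trees whose root nodes may be connected by edges arbitrarily; each node $x$ has a label $\mathcal L(x)\subseteq\mathsf{clos}(\mathcal A)$, each edge $\langle x,y\rangle$ a label $\mathcal L(\langle x,y\rangle)\subseteq\mathbf R_{\mathcal A}$; there are symmetric relations $\not\doteq$ and $\doteq$ on nodes. If $R\in\mathcal L(\langle x,y\rangle)$ and $R\sqsubseteq^*S$, then $y$ is an $S$-successor of $x$ and $x$ an $\mathrm{Inv}(S)$-predecessor of $y$; $y$ is an $S$-neighbour of $x$ if it is an $S$-successor or $\mathrm{Inv}(S)$-predecessor of $x$; successor/predecessor/neighbour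 means for some $S$; ancestor is the transitive closure of predecessor. $S^{\mathcal F}(x,C)=\{y\mid y$ an $S$-neighbour of $x$, $C\in\mathcal L(y)\}$. A node is blocked iff it is not a root and is directly or indirectly blocked. $x$ is directly blocked iff none of its ancestors is blocked and it has ancestors $x',y,y'$ with $y$ not a root, $x$ a successor of $x'$, $y$ a successor of $y'$, $\mathcal L(x)=\mathcal L(y)$, $\mathcal L(x')=\mathcal L(y')$, $\mathcal L(\langle x',x\rangle)=\mathcal L(\langle y',y\rangle)$ ($y$ blocks $x$). A node $y$ is indirectly blocked iff an ancestor is blocked or it is a successor of some $x$ with $\mathcal L(\langle x,y\rangle)=\emptyset$. Initial forest: one root $x^i$ per individual $a_i$ of $\mathcal A$ with $\mathcal L(x^i)=\{C\mid a_i:C\in\mathcal A\}$; an edge $\langle x^i,x^j\rangle$ labelled $\{R\mid(a_i,a_j):R\in\mathcal A\}$ whenever this set is nonempty; $x^i\not\doteq x^j$ iff $a_i\not\doteq a_j\in\mathcal A$; $\doteq$ empty. Expansion rules ($\bowtie\in\{\leqslant,\geqslant\}$): $\sqcap$: if $C_1\sqcap C_2\in\mathcal L(x)$, $x$ not indirectly blocked, $\{C_1,C_2\}\not\subseteq\mathcal L(x)$: add $C_1,C_2$. $\sqcup$: if $C_1\sqcup C_2\in\mathcal L(x)$, $x$ not indirectly blocked, $\{C_1,C_2\}\cap\mathcal L(x)=\emptyset$: add $C_1$ or $C_2$ (nondeterministic). $\exists$: if $\exists S.C\in\mathcal L(x)$, $x$ not blocked, no $S$-neighbour $y$ with $C\in\mathcal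 L(y)$: create new $y$ with $\mathcal L(\langle x,y\rangle)=\{S\}$, $\mathcal L(y)=\{C\}$. $\forall$: if $\forall S.C\in\mathcal L(x)$, $x$ not indirectly blocked, some $S$-neighbour $y$ with $C\notin\mathcal L(y)$: add $C$ to $\mathcal L(y)$. $\forall_+$: if $\forall S.C\in\mathcal L(x)$, $x$ not indirectly blocked, some $R$ with $\mathrm{Trans}(R)$, $R\sqsubseteq^*S$ and an $R$-neighbour $y$ with $\forall R.C\notin\mathcal L(y)$: add $\forall R.C$ to $\mathcal L(y)$. choose: if $(\bowtie n\,S\,C)\in\mathcal L(x)$, $x$ not indirectly blocked, some $S$-neighbour $y$ with $\{C,\sim C\}\cap\mathcal L(y)=\emptyset$: add $C$ or $\sim C$ to $\mathcal L(y)$. $\geqslant$: if $(\geqslant n\,S\,C)\in\mathcal L(x)$, $x$ not blocked, no $n$ $S$-neighbours $y_1,\dots,y_n$ with $C\in\mathcal L(y_i)$ and pairwise $y_i\not\doteq y_j$: create $n$ new nodes $y_i$ with $\mathcal L(\langle x,y_i\rangle)=\{S\}$, $\mathcal L(y_i)=\{C\}$, pairwise $y_i\not\doteq y_j$. $\leqslant$: if $(\leqslant n\,S\,C)\in\mathcal L(x)$, $x$ not indirectly blocked, $\#S^{\mathcal F}(x,C)>n$, and $S$-neighbours $y,z$ of $x$ with not $y\not\doteq z$, $y$ neither a root nor an ancestor of $z$, $C\in\mathcal L(y)\cap\mathcal L(z)$: (1) add $\mathcal L(y)$ to $\mathcal L(z)$; (2) if $z$ is an ancestor of $x$, add $\{\mathrm{Inv}(R)\mid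 R\in\mathcal L(\langle x,y\rangle)\}$ to $\mathcal L(\langle z,x\rangle)$, else add $\mathcal L(\langle x,y\rangle)$ to $\mathcal L(\langle x,z\rangle)$; (3) set $\mathcal L(\langle x,y\rangle)=\emptyset$; (4) set $u\not\doteq z$ for all $u$ with $u\not\doteq y$. $\leqslant_r$: if $(\leqslant n\,S\,C)\in\mathcal L(x)$, $\#S^{\mathcal F}(x,C)>n$, and two root $S$-neighbours $y,z$ of $x$ with $C\in\mathcal L(y)\cap\mathcal L(z)$ and not $y\not\doteq z$: (1) add $\mathcal L(y)$ to $\mathcal L(z)$; (2) for each edge $\langle y,w\rangle$, create $\langle z,w\rangle$ with empty label if absent and add $\mathcal L(\langle y,w\rangle)$ to it; (3) likewise each edge $\langle w,y\rangle$ into $\langle w,z\rangle$; (4) set $\mathcal L(y)=\emptyset$ and remove all edges to/from $y$; (5) set $u\not\doteq z$ for all $u$ with $u\not\doteq y$, and $y\doteq z$. Clash: $\{A,\neg A\}\subseteq\mathcal L(x)$ for a concept name $A$, or $(\leqslant n\,S\,C)\in\mathcal L(x)$ and $x$ has $n+1$ $S$-neighbours $y_0,\dots,y_n$ with $C\in\mathcal L(y_i)$ and pairwise $y_i\not\doteq y_j$. Clash-free: no node has a clash. Complete: no rule applicable. The completion algorithm starts from the initial forest and applies rules, stopping at a clash. *)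

(* Defs.v *)
From Stdlib Require Import List Relations.
Import ListNotations.

(** * Syntax *)

Inductive role : Type :=
| RN   (r : nat)
| RInv (r : nat).

Definition Inv (R : role) : role :=
  match R with RN r => RInv r | RInv r => RN r end.

Definition role_name (R : role) : nat :=
  match R with RN r => r | RInv r => r end.

Inductive concept : Type :=
| CName    (A : nat)
| CNot     (C : concept)
| CAnd     (C D : concept)
| COr      (C D : concept)
| CAll     (R : role) (C : concept)
| CEx      (R : role) (C : concept)
| CAtLeast (n : nat) (R : role) (C : concept)
| CAtMost  (n : nat) (R : role) (C : concept).

Inductive assertion : Type :=
| AConcept (a : nat) (C : concept)
| ARole    (a b : nat) (R : role)
| ANeq     (a b : nat).

Definition abox := list assertion.
Definition role_hierarchy := list (role * role).  (* (R,S) stands for R ⊑ S *)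

(* transitive role names are given by a predicate TN on role names;
   Trans(R) iff R or Inv(R) is a transitive role name *)
Definition Trans (TN : nat -> Prop) (R : role) : Prop := TN (role_name R).

Definition hier_step (H : role_hierarchy) (R S : role) : Prop :=
  In (R, S) H \/ In (Inv R, Inv S) H.

Definition sub_role (H : role_hierarchy) : role -> role -> Prop :=
  clos_refl_trans role (hier_step H).

Definition simple_role (TN : nat -> Prop) (H : role_hierarchy) (S : role) : Prop :=
  forall R, sub_role H R S -> ~ Trans TN R.

Fixpoint nnf (C : concept) : Prop :=
  match C with
  | CName _ => True
  | CNot D => match D with CName _ => True | _ => False end
  | CAnd C1 C2 | COr C1 C2 => nnf C1 /\ nnf C2
  | CAll _ D | CEx _ D | CAtLeast _ _ D | CAtMost _ _ D => nnf D
  end.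

Fixpoint nr_simple (TN : nat -> Prop) (H : role_hierarchy) (C : concept) : Prop :=
  match C with
  | CName _ => True
  | CNot D => nr_simple TN H D
  | CAnd C1 C2 | COr C1 C2 => nr_simple TN H C1 /\ nr_simple TN H C2
  | CAll _ D | CEx _ D => nr_simple TN H D
  | CAtLeast _ S0 D | CAtMost _ S0 D => simple_role TN H S0 /\ nr_simple TN H D
  end.

Definition abox_nnf (A : abox) : Prop :=
  forall a C, In (AConcept a C) A -> nnf C.

Definition abox_shiq (TN : nat -> Prop) (H : role_hierarchy) (A : abox) : Prop :=
  forall a C, In (AConcept a C) A -> nr_simple TN H C.

(* the fixed concept name used for (<= (-1) R C) := A ⊓ ¬A *)
Definition bottomC : concept := CAnd (CName 0) (CNot (CName 0)).

Fixpoint nnf_neg (C : concept) : concept :=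
  match C with
  | CName A => CNot (CName A)
  | CNot D => D
  | CAnd C1 C2 => COr (nnf_neg C1) (nnf_neg C2)
  | COr C1 C2 => CAnd (nnf_neg C1) (nnf_neg C2)
  | CAll R D => CEx R (nnf_neg D)
  | CEx R D => CAll R (nnf_neg D)
  | CAtMost n R D => CAtLeast (S n) R D
  | CAtLeast 0 R D => bottomC
  | CAtLeast (S n) R D => CAtMost n R D
  end.

Definition imm_sub (C D : concept) : Prop :=
  match C with
  | CName _ => False
  | CNot E => D = E
  | CAnd C1 C2 | COr C1 C2 => D = C1 \/ D = C2
  | CAll _ E | CEx _ E | CAtLeast _ _ E | CAtMost _ _ E => D = E
  end.

Inductive in_closure (C0 : concept) : concept -> Prop :=
| icl_base : in_closure C0 C0
| icl_sub  : forall C D, in_closure C0 C -> imm_sub C D -> in_closure C0 D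
| icl_neg  : forall C, in_closure C0 C -> in_closure C0 (nnf_neg C).

Definition clos (A : abox) (C : concept) : Prop :=
  exists a C0, In (AConcept a C0) A /\ in_closure C0 C.

Fixpoint role_in_concept (R : role) (C : concept) : Prop :=
  match C with
  | CName _ => False
  | CNot D => role_in_concept R D
  | CAnd C1 C2 | COr C1 C2 => role_in_concept R C1 \/ role_in_concept R C2
  | CAll S0 D | CEx S0 D | CAtLeast _ S0 D | CAtMost _ S0 D =>
      R = S0 \/ role_in_concept R D
  end.

Definition role_occurs (H : role_hierarchy) (A : abox) (R : role) : Prop :=
  (exists a C, In (AConcept a C) A /\ role_in_concept R C) \/
  (exists a b, In (ARole a b R) A) \/
  (exists S, In (R, S) H \/ In (S, R) H).

Definition in_RA (H : role_hierarchy) (A : abox) (R : role) : Prop :=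
  role_occurs H A R \/ role_occurs H A (Inv R).

Definition ind_in (A : abox) (a : nat) : Prop :=
  exists x, In x A /\
    match x with
    | AConcept b _ => a = b
    | ARole b c _ | ANeq b c => a = b \/ a = c
    end.

(** * Tableaux *)

Definition at_most {T : Type} (n : nat) (P : T -> Prop) : Prop :=
  exists l : list T, length l <= n /\ forall t, P t -> In t l.

Definition at_least {T : Type} (n : nat) (P : T -> Prop) : Prop :=
  exists l : list T, length l = n /\ NoDup l /\ forall t, In t l -> P t.

Definition is_tableau (TN : nat -> Prop) (H : role_hierarchy) (A : abox)
  (S : Type) (L : S -> concept -> Prop) (E : role -> S -> S -> Prop)
  (I : nat -> S) : Prop :=
  inhabited S /\
  (* L : S -> 2^clos(A) *)
  (forall s C, L s C -> clos A C) /\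
  (* E : R_A -> 2^(S x S) *)
  (forall R s t, E R s t -> in_RA H A R) /\
  (forall s C, L s C -> ~ L s (CNot C)) /\
  (forall s C1 C2, L s (CAnd C1 C2) -> L s C1 /\ L s C2) /\
  (forall s C1 C2, L s (COr C1 C2) -> L s C1 \/ L s C2) /\
  (forall s t S0 C, L s (CAll S0 C) -> E S0 s t -> L t C) /\
  (forall s S0 C, L s (CEx S0 C) -> exists t, E S0 s t /\ L t C) /\
  (forall s t R S0 C, L s (CAll S0 C) -> in_RA H A R -> E R s t ->
              sub_role H R S0 -> Trans TN R -> L t (CAll R C)) /\
  (forall s t R, in_RA H A R -> (E R s t <-> E (Inv R) t s)) /\
  (forall s t R S0, in_RA H A S0 -> E R s t -> sub_role H R S0 ->
              E S0 s t) /\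
  (forall s n S0 C, L s (CAtMost n S0 C) ->
              at_most n (fun t => E S0 s t /\ L t C)) /\
  (forall s n S0 C, L s (CAtLeast n S0 C) ->
              at_least n (fun t => E S0 s t /\ L t C)) /\
  (forall s t n S0 C,
              (L s (CAtMost n S0 C) \/ L s (CAtLeast n S0 C)) -> E S0 s t ->
              L t C \/ L t (nnf_neg C)) /\
  (forall a C, In (AConcept a C) A -> L (I a) C) /\
  (forall a b R, In (ARole a b R) A -> E R (I a) (I b)) /\
  (forall a b, In (ANeq a b) A -> I a <> I b).

Definition has_tableau (TN : nat -> Prop) (H : role_hierarchy) (A : abox) : Prop :=
  exists (S : Type) (L : S -> concept -> Prop) (E : role -> S -> S -> Prop)
         (I : nat -> S), is_tableau TN H A S L E I.

(** * Completion forests *)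

(* Nodes are natural numbers.  An edge <x,y> may exist with an empty label. *)
Record forest : Type := MkForest {
  f_node : nat -> Prop;
  f_root : nat -> Prop;
  f_lab  : nat -> concept -> Prop;
  f_edge : nat -> nat -> Prop;
  f_elab : nat -> nat -> role -> Prop;
  f_neq  : nat -> nat -> Prop;
  f_eq   : nat -> nat -> Prop
}.

Section ForestNotions.
Variable TN : nat -> Prop.
Variable H : role_hierarchy.
Variable F : forest.

Definition S_succ (S0 : role) (x y : nat) : Prop :=
  exists R, f_elab F x y R /\ sub_role H R S0.

Definition S_nbr (S0 : role) (x y : nat) : Prop :=
  S_succ S0 x y \/ S_succ (Inv S0) y x.

Definition ancestor (a x : nat) : Prop := clos_trans nat (f_edge F) a x.

Definition lab_eq (x y : nat) : Prop := forall C, f_lab F x C <-> f_lab F y C.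
Definition elab_eq (x' x y' y : nat) : Prop :=
  forall R, f_elab F x' x R <-> f_elab F y' y R.

(* the pairwise-label condition of direct blocking (without the requirement
   that no ancestor is blocked) *)
Definition block_cond (x : nat) : Prop :=
  exists x' y y', ancestor x' x /\ ancestor y x /\ ancestor y' x /\
    ~ f_root F y /\ f_edge F x' x /\ f_edge F y' y /\
    lab_eq x y /\ lab_eq x' y' /\ elab_eq x' x y' y.

Definition empty_in (x : nat) : Prop :=
  exists p, f_edge F p x /\ forall R, ~ f_elab F p x R.

(* the (unique, on finite forests) solution of the mutually recursive
   definition of blocking, unfolded along the ancestor chain *)
Definition blocked_sol (x : nat) : Prop :=
  ~ f_root F x /\
  exists z, (z = x \/ ancestor z x) /\ ~ f_root F z /\
            (block_cond z \/ empty_in z).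

Definition directly_blocked (x : nat) : Prop :=
  (forall a, ancestor a x -> ~ blocked_sol a) /\ block_cond x.

Definition indirectly_blocked (x : nat) : Prop :=
  (exists a, ancestor a x /\ blocked_sol a) \/ empty_in x.

Definition blocked (x : nat) : Prop :=
  ~ f_root F x /\ (directly_blocked x \/ indirectly_blocked x).

Definition card_gt (n : nat) (P : nat -> Prop) : Prop :=
  exists l, NoDup l /\ length l = S n /\ forall y, In y l -> P y.

Definition clash_at (x : nat) : Prop :=
  (exists A0, f_lab F x (CName A0) /\ f_lab F x (CNot (CName A0))) \/
  (exists n S0 C, f_lab F x (CAtMost n S0 C) /\
     exists l, length l = S n /\ ForallOrdPairs (f_neq F) l /\
       forall y, In y l -> S_nbr S0 x y /\ f_lab F y C).

Definition clash_free : Prop := forall x, ~ clash_at x.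

End ForestNotions.

Definition add_labels (F : forest) (x : nat) (P : concept -> Prop) : forest :=
  MkForest (f_node F) (f_root F)
    (fun u D => f_lab F u D \/ (u = x /\ P D))
    (f_edge F) (f_elab F) (f_neq F) (f_eq F).

Definition add_label (F : forest) (x : nat) (C : concept) : forest :=
  add_labels F x (fun D => D = C).

Definition new_succs (F : forest) (x : nat) (ys : list nat) (S0 : role)
  (C : concept) (pw : bool) : forest :=
  MkForest
    (fun u => f_node F u \/ In u ys)
    (f_root F)
    (fun u D => f_lab F u D \/ (In u ys /\ D = C))
    (fun u v => f_edge F u v \/ (u = x /\ In v ys))
    (fun u v R => f_elab F u v R \/ (u = x /\ In v ys /\ R = S0))
    (fun u v => f_neq F u v \/
                (if pw then In u ys /\ In v ys /\ u <> v else False))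
    (f_eq F).

Definition fresh (F : forest) (y : nat) : Prop := ~ f_node F y.

Definition init_forest (A : abox) : forest :=
  MkForest
    (ind_in A)
    (ind_in A)
    (fun x C => In (AConcept x C) A)
    (fun x y => exists R, In (ARole x y R) A)
    (fun x y R => In (ARole x y R) A)
    (fun x y => In (ANeq x y) A \/ In (ANeq y x) A)
    (fun _ _ => False).

(** * Expansion rules *)

Section Rules.
Variable TN : nat -> Prop.
Variable H : role_hierarchy.

Inductive rule_step (F : forest) : forest -> Prop :=
| r_and : forall x C1 C2,
    f_lab F x (CAnd C1 C2) -> ~ indirectly_blocked F x ->
    ~ (f_lab F x C1 /\ f_lab F x C2) ->
    rule_step F (add_labels F x (fun D => D = C1 \/ D = C2))
| r_or : forall x C1 C2 D,
    f_lab F x (COr C1 C2) -> ~ indirectly_blocked F x ->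
    ~ f_lab F x C1 -> ~ f_lab F x C2 -> (D = C1 \/ D = C2) ->
    rule_step F (add_label F x D)
| r_ex : forall x S0 C y,
    f_lab F x (CEx S0 C) -> ~ blocked F x ->
    ~ (exists z, S_nbr H F S0 x z /\ f_lab F z C) ->
    fresh F y ->
    rule_step F (new_succs F x [y] S0 C false)
| r_all : forall x S0 C y,
    f_lab F x (CAll S0 C) -> ~ indirectly_blocked F x ->
    S_nbr H F S0 x y -> ~ f_lab F y C ->
    rule_step F (add_label F y C)
| r_allplus : forall x S0 C R y,
    f_lab F x (CAll S0 C) -> ~ indirectly_blocked F x ->
    Trans TN R -> sub_role H R S0 -> S_nbr H F R x y ->
    ~ f_lab F y (CAll R C) ->
    rule_step F (add_label F y (CAll R C))
| r_choose : forall x n S0 C y D,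
    (f_lab F x (CAtMost n S0 C) \/ f_lab F x (CAtLeast n S0 C)) ->
    ~ indirectly_blocked F x ->
    S_nbr H F S0 x y -> ~ f_lab F y C -> ~ f_lab F y (nnf_neg C) ->
    (D = C \/ D = nnf_neg C) ->
    rule_step F (add_label F y D)
| r_ge : forall x n S0 C ys,
    f_lab F x (CAtLeast n S0 C) -> ~ blocked F x ->
    ~ (exists l, length l = n /\ ForallOrdPairs (f_neq F) l /\
         forall y, In y l -> S_nbr H F S0 x y /\ f_lab F y C) ->
    length ys = n -> NoDup ys -> (forall y, In y ys -> fresh F y) ->
    rule_step F (new_succs F x ys S0 C true)
| r_le : forall x n S0 C y z,
    f_lab F x (CAtMost n S0 C) -> ~ indirectly_blocked F x ->
    card_gt n (fun w => S_nbr H F S0 x w /\ f_lab F w C) ->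
    S_nbr H F S0 x y -> S_nbr H F S0 x z -> y <> z ->
    ~ f_neq F y z -> ~ f_root F y -> ~ ancestor F y z ->
    f_lab F y C -> f_lab F z C ->
    rule_step F
      (MkForest
         (f_node F) (f_root F)
         (fun u D => f_lab F u D \/ (u = z /\ f_lab F y D))
         (fun u v => f_edge F u v \/ (ancestor F z x /\ u = z /\ v = x))
         (fun u v R =>
            (f_elab F u v R /\ ~ (u = x /\ v = y)) \/
            (ancestor F z x /\ u = z /\ v = x /\
               exists R', f_elab F x y R' /\ R = Inv R') \/
            (~ ancestor F z x /\ u = x /\ v = z /\ f_elab F x y R))
         (fun u v => f_neq F u v \/ (v = z /\ f_neq F u y) \/
                     (u = z /\ f_neq F v y))
         (f_eq F))
| r_ler : forall x n S0 C y z,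
    f_lab F x (CAtMost n S0 C) ->
    card_gt n (fun w => S_nbr H F S0 x w /\ f_lab F w C) ->
    S_nbr H F S0 x y -> S_nbr H F S0 x z -> y <> z ->
    f_root F y -> f_root F z ->
    f_lab F y C -> f_lab F z C -> ~ f_neq F y z ->
    rule_step F
      (MkForest
         (f_node F) (f_root F)
         (fun u D => (f_lab F u D \/ (u = z /\ f_lab F y D)) /\ u <> y)
         (* (2) edges <y,w> copied to <z,w>; then (3) edges <w,y> copied to
            <w,z> (edges after step (2)); (4) all edges to/from y removed *)
         (fun u v =>
            ((f_edge F u v \/ (u = z /\ f_edge F y v)) \/
             (v = z /\ (f_edge F u y \/ (u = z /\ f_edge F y y))))
            /\ u <> y /\ v <> y)
         (fun u v R =>
            ((f_elab F u v R \/ (u = z /\ f_elab F y v R)) \/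
             (v = z /\ (f_elab F u y R \/ (u = z /\ f_elab F y y R))))
            /\ u <> y /\ v <> y)
         (fun u v => f_neq F u v \/ (v = z /\ f_neq F u y) \/
                     (u = z /\ f_neq F v y))
         (fun u v => f_eq F u v \/ (u = y /\ v = z) \/ (u = z /\ v = y))).

(* the algorithm stops at a clash: rules are only applied to clash-free forests *)
Definition alg_step (F F' : forest) : Prop := clash_free H F /\ rule_step F F'.

Definition alg_run : forest -> forest -> Prop := clos_refl_trans forest alg_step.

Definition complete (F : forest) : Prop := ~ exists F', rule_step F F'.

End Rules.

(* Main.v *)
Require Import Defs.
From Stdlib Require Import List Relations Lia Arith Classical ClassicalEpsilon Wellfounded.
Import ListNotations.

Fixpoint subs (C : concept) : list concept :=
  C :: match C with
       | CName _ => []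
       | CNot D => subs D
       | CAnd C1 C2 | COr C1 C2 => subs C1 ++ subs C2
       | CAll _ D | CEx _ D | CAtLeast _ _ D | CAtMost _ _ D => subs D
       end.

Lemma subs_trans : forall C0 C D, In C (subs C0) -> In D (subs C) -> In D (subs C0).
Proof.
  induction C0; simpl; intros C D H1 H2; destruct H1 as [<-|H1]; simpl in *; auto;
  try (right; eauto; fail);
  try (apply in_app_or in H1; right; apply in_or_app; destruct H1; [left|right]; eauto).
Qed.

Lemma subs_self : forall C, In C (subs C).
Proof. destruct C; simpl; auto. Qed.

Lemma imm_sub_subs : forall C D, imm_sub C D -> In D (subs C).
Proof.
  destruct C; simpl; intros D H; try contradiction;
  try (destruct H as [H|H]); subst; right; try apply in_or_app; auto using subs_self.
Qed.

Lemma subs_nnf : forall C0 C, nnf C0 -> In C (subs C0) -> nnf C.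
Proof.
  induction C0; simpl; intros C Hn H1; destruct H1 as [<-|H1]; simpl; auto; try contradiction.
  - destruct C0; try contradiction. simpl in H1. destruct H1 as [<-|[]]. exact I.
  - destruct Hn. apply in_app_or in H1. destruct H1; eauto.
  - destruct Hn. apply in_app_or in H1. destruct H1; eauto.
Qed.

Lemma nnf_neg_nnf : forall C, nnf C -> nnf (nnf_neg C).
Proof.
  induction C; simpl; intros Hn; try (destruct Hn; split; auto; fail); auto.
  - destruct C; try contradiction. exact I.
  - destruct n; simpl; auto.
Qed.

Definition topC : concept := COr (CNot (CName 0)) (CName 0).

Lemma neg3 : forall C, nnf C -> nnf_neg (nnf_neg (nnf_neg C)) = nnf_neg C.
Proof.
  induction C; simpl; intros Hn; auto;
  try (destruct Hn; rewrite IHC1, IHC2 by auto; auto; fail);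
  try (rewrite IHC by auto; auto; fail).
  - destruct C; try contradiction; reflexivity.
  - destruct n; reflexivity.
Qed.

Definition clist (C0 : concept) : list concept :=
  subs C0 ++ map nnf_neg (subs C0) ++ map (fun C => nnf_neg (nnf_neg C)) (subs C0)
  ++ [CName 0; CNot (CName 0)].

Lemma inl1 : forall C0 X, In X (subs C0) -> In X (clist C0).
Proof. intros; unfold clist; apply in_or_app; auto. Qed.
Lemma inl2 : forall C0 X, In X (subs C0) -> In (nnf_neg X) (clist C0).
Proof. intros; unfold clist; apply in_or_app; right; apply in_or_app; left; apply in_map; auto. Qed.
Lemma inl3 : forall C0 X, In X (subs C0) -> In (nnf_neg (nnf_neg X)) (clist C0).
Proof. intros; unfold clist; apply in_or_app; right; apply in_or_app; right; apply in_or_app; left;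
  apply in_map with (f := fun C => nnf_neg (nnf_neg C)); auto. Qed.
Lemma inl4 : forall C0 X, In X [CName 0; CNot (CName 0)] -> In X (clist C0).
Proof. intros; unfold clist; repeat (apply in_or_app; right); auto. Qed.

Ltac csolve Hsub HC1 :=
  solve [ apply inl1; (assumption || (apply Hsub; simpl; auto))
        | apply inl2; (assumption || (apply Hsub; simpl; auto))
        | apply inl3; (assumption || (apply Hsub; simpl; auto))
        | apply inl4; simpl; auto ].

Lemma clist_sub : forall C0 C D, nnf C0 -> In C (clist C0) -> imm_sub C D -> In D (clist C0).
Proof.
  intros C0 C D Hn HC Hs. unfold clist in HC.
  repeat (apply in_app_or in HC; destruct HC as [HC|HC]).
  - apply inl1. eapply subs_trans; eauto. apply imm_sub_subs; auto.
  - apply in_map_iff in HC. destruct HC as [C1 [<- HC1]].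
    assert (Hsub: forall E, imm_sub C1 E -> In E (subs C0)).
    { intros E HE. eapply subs_trans; eauto. apply imm_sub_subs; auto. }
    assert (Hn1 : nnf C1) by (eapply subs_nnf; eauto).
    destruct C1; simpl in Hs;
      try (destruct Hs as [->| ->]; csolve Hsub HC1);
      try (subst; csolve Hsub HC1);
      try (destruct C1; try contradiction; simpl in Hs; try destruct Hs; subst; csolve Hsub HC1);
      try (destruct n; simpl in Hs; [destruct Hs as [->| ->]; csolve Hsub HC1 | subst; csolve Hsub HC1]).
  - apply in_map_iff in HC. destruct HC as [C1 [<- HC1]].
    assert (Hsub: forall E, imm_sub C1 E -> In E (subs C0)).
    { intros E HE. eapply subs_trans; eauto. apply imm_sub_subs; auto. }
    assert (Hn1 : nnf C1) by (eapply subs_nnf; eauto).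
    destruct C1; simpl in Hs;
      try (destruct Hs as [->| ->]; csolve Hsub HC1);
      try (subst; csolve Hsub HC1);
      try (destruct Hs; fail);
      try (destruct C1; try contradiction; simpl in Hs; try destruct Hs; subst; csolve Hsub HC1);
      try (destruct n; simpl in Hs; [destruct Hs as [->| ->]; csolve Hsub HC1 | subst; csolve Hsub HC1]).
  - simpl in HC. destruct HC as [<-|[<-|[]]]; simpl in Hs.
    + destruct Hs.
    + subst. apply inl4; simpl; auto.
Qed.

Lemma clist_neg : forall C0 C, nnf C0 -> In C (clist C0) -> In (nnf_neg C) (clist C0).
Proof.
  intros C0 C Hn HC. unfold clist in *.
  repeat (apply in_app_or in HC; destruct HC as [HC|HC]).
  - apply in_or_app; right; apply in_or_app; left; apply in_map; auto.
  - apply in_map_iff in HC. destruct HC as [C1 [<- HC1]].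
    apply in_or_app; right; apply in_or_app; right; apply in_or_app; left.
    apply in_map_iff; eauto.
  - apply in_map_iff in HC. destruct HC as [C1 [<- HC1]].
    rewrite neg3 by (eapply subs_nnf; eauto).
    apply in_or_app; right; apply in_or_app; left; apply in_map; auto.
  - simpl in HC. destruct HC as [<-|[<-|[]]]; simpl;
    repeat (apply in_or_app; right); simpl; auto.
Qed.

Lemma in_closure_clist : forall C0 C, nnf C0 -> in_closure C0 C -> In C (clist C0).
Proof.
  intros C0 C Hn Hc. induction Hc.
  - unfold clist. apply in_or_app; left. apply subs_self.
  - eapply clist_sub; eauto.
  - apply clist_neg; auto.
Qed.

Definition Ulist (A : abox) : list concept :=
  flat_map (fun x => match x with AConcept _ C => clist C | _ => [] end) A.

Lemma clos_U : forall A C, abox_nnf A -> clos A C -> In C (Ulist A).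
Proof.
  intros A C Hn [a [C0 [HA Hc]]]. unfold Ulist. apply in_flat_map.
  exists (AConcept a C0). split; auto. apply in_closure_clist; eauto.
Qed.

Fixpoint roles_c (C : concept) : list role :=
  match C with
  | CName _ => []
  | CNot D => roles_c D
  | CAnd C1 C2 | COr C1 C2 => roles_c C1 ++ roles_c C2
  | CAll S0 D | CEx S0 D | CAtLeast _ S0 D | CAtMost _ S0 D => S0 :: roles_c D
  end.

Lemma roles_c_ok : forall R C, role_in_concept R C -> In R (roles_c C).
Proof.
  induction C; simpl; intros Hr; try contradiction; auto;
  try (apply in_or_app; destruct Hr; auto);
  destruct Hr; auto.
Qed.

Definition RL0 (H : role_hierarchy) (A : abox) : list role :=
  flat_map (fun x => match x with AConcept _ C => roles_c C | ARole _ _ R => [R] | _ => [] end) A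
  ++ flat_map (fun p => [fst p; snd p]) H.

Definition RLlist H A := RL0 H A ++ map Inv (RL0 H A).

Lemma Inv_Inv : forall R, Inv (Inv R) = R.
Proof. destruct R; reflexivity. Qed.

Lemma occurs_RL0 : forall H A R, role_occurs H A R -> In R (RL0 H A).
Proof.
  intros H A R [[a [C [HA HC]]]|[[a [b HA]]|[S0 [HS|HS]]]]; unfold RL0;
  apply in_or_app.
  - left. apply in_flat_map. exists (AConcept a C). split; auto. apply roles_c_ok; auto.
  - left. apply in_flat_map. exists (ARole a b R). simpl; auto.
  - right. apply in_flat_map. exists (R, S0). simpl; auto.
  - right. apply in_flat_map. exists (S0, R). simpl; auto.
Qed.

Lemma in_RA_RL : forall H A R, in_RA H A R -> In R (RLlist H A).
Proof.
  intros H A R [Ho|Ho]; apply occurs_RL0 in Ho; unfold RLlist; apply in_or_app; auto.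
  right. rewrite <- (Inv_Inv R). apply in_map. auto.
Qed.

Definition indL (A : abox) : list nat :=
  flat_map (fun x => match x with AConcept b _ => [b] | ARole b c _ => [b; c] | ANeq b c => [b; c] end) A.

Lemma indL_ok : forall A a, ind_in A a <-> In a (indL A).
Proof.
  intros A a; unfold ind_in, indL; rewrite in_flat_map; split;
  intros [x [Hx Hm]]; exists x; split; auto; destruct x; simpl in *;
  intuition congruence.
Qed.


Definition dec (P : Prop) : bool := if excluded_middle_informative P then true else false.
Lemma dec_true : forall P, dec P = true <-> P.
Proof. intros P; unfold dec; destruct (excluded_middle_informative P); split; auto; discriminate. Qed.
Lemma dec_false : forall P, dec P = false <-> ~ P.
Proof. intros P; unfold dec; destruct (excluded_middle_informative P); split; auto; try discriminate; tauto. Qed.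

Lemma dec_t : forall P, dec P = true -> P. Proof. intros P; apply dec_true. Qed.
Lemma dec_f : forall P, dec P = false -> ~ P. Proof. intros P; apply dec_false. Qed.
Lemma dec_t' : forall P, P -> dec P = true. Proof. intros P; apply dec_true. Qed.
Lemma dec_f' : forall P, ~ P -> dec P = false. Proof. intros P; apply dec_false. Qed.

Definition cnt {T} (P : T -> Prop) (l : list T) : nat := length (filter (fun c => dec (P c)) l).

Lemma cnt_le : forall T (P : T -> Prop) l, cnt P l <= length l.
Proof. intros; unfold cnt; induction l; simpl; auto; destruct (dec (P a)); simpl; lia. Qed.

Lemma cnt_mono : forall T (P Q : T -> Prop) l, (forall x, In x l -> P x -> Q x) -> cnt P l <= cnt Q l.
Proof.
  intros T P Q l Hpq; unfold cnt; induction l; simpl; auto.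
  assert (IH : length (filter (fun c => dec (P c)) l) <= length (filter (fun c => dec (Q c)) l))
    by (apply IHl; intros; apply Hpq; simpl; auto).
  destruct (dec (P a)) eqn:E1; destruct (dec (Q a)) eqn:E2; simpl; try lia.
  apply dec_t in E1. apply dec_f in E2. exfalso; apply E2; apply Hpq; simpl; auto.
Qed.

Lemma cnt_strict : forall T (P Q : T -> Prop) l, (forall x, In x l -> P x -> Q x) ->
  (exists x, In x l /\ Q x /\ ~ P x) -> cnt P l < cnt Q l.
Proof.
  intros T P Q l Hpq [x [Hx [HQ HP]]]; unfold cnt; induction l; simpl; [destruct Hx|].
  assert (IH : length (filter (fun c => dec (P c)) l) <= length (filter (fun c => dec (Q c)) l))
    by (apply cnt_mono; intros; apply Hpq; simpl; auto).
  destruct Hx as [<-|Hx].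
  - rewrite (dec_f' (P a)) by auto.
    rewrite (dec_t' (Q a)) by auto. simpl; lia.
  - assert (IH2 : length (filter (fun c => dec (P c)) l) < length (filter (fun c => dec (Q c)) l))
      by (apply IHl; auto; intros; apply Hpq; simpl; auto).
    destruct (dec (P a)) eqn:E1; destruct (dec (Q a)) eqn:E2; simpl; try lia.
    apply dec_t in E1; apply dec_f in E2; exfalso; apply E2, Hpq; simpl; auto.
Qed.

Definition Rk (K : nat) (f g : nat -> nat) : Prop :=
  exists d, d < K /\ f d < g d /\ forall d', d' < d -> f d' <= g d'.

Lemma Rk_ext : forall K f f' g g', (forall d, f d = f' d) -> (forall d, g d = g' d) ->
  Rk K f g -> Rk K f' g'.
Proof.
  intros K f f' g g' Hf Hg [d [Hd [H1 H2]]]. exists d. split; auto.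
  rewrite <- Hf, <- Hg. split; auto. intros d' Hd'. rewrite <- Hf, <- Hg. auto.
Qed.

Lemma Rk_wf : forall K, well_founded (Rk K).
Proof.
  induction K.
  - intros g; constructor; intros f [d [Hd _]]; lia.
  - intros g.
    assert (main : forall n, forall h, Acc (Rk K) h -> forall g, g 0 = n -> (forall d, g (S d) = h d) -> Acc (Rk (S K)) g).
    { intros n. induction n as [n IHn] using lt_wf_ind.
      intros h Hacc. induction Hacc as [h _ IHh].
      intros g0 Hg0 Hgh. constructor. intros f [d [Hd [Hlt Hle]]].
      destruct d as [|d].
      - eapply (IHn (f 0)); [lia| apply (IHK (fun d => f (S d))) | reflexivity | reflexivity].
      - assert (Hf0 : f 0 <= g0 0) by (apply Hle; lia).
        destruct (Nat.eq_dec (f 0) n) as [Heq|Hne].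
        + apply (IHh (fun d => f (S d))).
          * exists d. split; [lia|]. split; [rewrite <- Hgh; auto|].
            intros d' Hd'. rewrite <- Hgh. apply Hle. lia.
          * auto.
          * reflexivity.
        + eapply (IHn (f 0)); [lia| apply (IHK (fun d => f (S d))) | reflexivity | reflexivity]. }
    eapply main; [apply (IHK (fun d => g (S d))) | reflexivity | reflexivity].
Qed.

Fixpoint allb (n : nat) : list (list bool) :=
  match n with
  | 0 => [[]]
  | S n => map (cons true) (allb n) ++ map (cons false) (allb n)
  end.

Lemma allb_ok : forall l, In l (allb (length l)).
Proof.
  induction l; simpl; auto. apply in_or_app. destruct a; [left|right]; apply in_map; auto.
Qed.

Definition bits {T} (P : T -> Prop) (l : list T) : list bool := map (fun c => dec (P c)) l.

Lemma bits_eq : forall T (P Q : T -> Prop) l, bits P l = bits Q l -> forall c, In c l -> (P c <-> Q c).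
Proof.
  intros T P Q l. induction l; simpl; intros Heq c Hc; [destruct Hc|].
  injection Heq as H1 H2. destruct Hc as [<-|Hc]; auto.
  destruct (dec (P a)) eqn:E1; destruct (dec (Q a)) eqn:E2; try discriminate;
  [apply dec_t in E1; apply dec_t in E2| apply dec_f in E1; apply dec_f in E2]; tauto.
Qed.

Lemma notnodup_map : forall (X Y : Type) (f : X -> Y) l, NoDup l -> ~ NoDup (map f l) ->
  exists a b, In a l /\ In b l /\ a <> b /\ f a = f b.
Proof.
  intros X Y f l. induction l as [|a l IH]; simpl; intros Hnd Hn.
  - exfalso; apply Hn; constructor.
  - inversion Hnd; subst.
    destruct (classic (In (f a) (map f l))) as [Hin|Hin].
    + apply in_map_iff in Hin. destruct Hin as [b [Hb Hbl]].
      exists a, b. repeat split; auto. intros ->; auto.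
    + destruct (classic (NoDup (map f l))) as [Hnd2|Hnd2].
      * exfalso; apply Hn; constructor; auto.
      * destruct (IH H2 Hnd2) as [x [y [? [? [? ?]]]]]. exists x, y; auto.
Qed.

Lemma FOP_nodup_map : forall (X Y : Type) (R : X -> X -> Prop) (f : X -> Y) l,
  ForallOrdPairs R l -> (forall u v, R u v -> f u <> f v) -> (forall u, ~ R u u) -> NoDup (map f l).
Proof.
  intros X Y R f l Hf Hr Hirr. induction Hf; simpl; constructor; auto.
  intros Hin. apply in_map_iff in Hin. destruct Hin as [b [Hb Hbl]].
  rewrite Forall_forall in H. apply (Hr a b); auto.
Qed.

Lemma FOP_of_nodup : forall (X : Type) (R : X -> X -> Prop) l, NoDup l ->
  (forall u v, In u l -> In v l -> u <> v -> R u v) -> ForallOrdPairs R l.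
Proof.
  intros X R l Hnd Hr. induction Hnd; constructor.
  - rewrite Forall_forall. intros y Hy. apply Hr; simpl; auto. intros ->; auto.
  - apply IHHnd. intros; apply Hr; simpl; auto.
Qed.

Lemma FOP_map : forall (X : Type) (R R' : X -> X -> Prop) (f : X -> X) l,
  ForallOrdPairs R l -> (forall u v, In u l -> In v l -> R u v -> R' (f u) (f v)) ->
  ForallOrdPairs R' (map f l).
Proof.
  intros X R R' f l Hf. induction Hf; simpl; intros Hr; constructor.
  - rewrite Forall_forall in *. intros y Hy. apply in_map_iff in Hy.
    destruct Hy as [b [<- Hb]]. apply Hr; simpl; auto.
  - apply IHHf. intros; apply Hr; simpl; auto.
Qed.

Lemma FOP_in : forall (X : Type) (R : X -> X -> Prop) l, ForallOrdPairs R l ->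
  forall u v, In u l -> In v l -> u <> v -> R u v \/ R v u.
Proof.
  intros X R l Hf. induction Hf; simpl; intros u v Hu Hv Hne; [destruct Hu|].
  rewrite Forall_forall in H.
  destruct Hu as [<-|Hu]; destruct Hv as [<-|Hv]; auto; congruence.
Qed.

Definition sumf {T} (f : T -> nat) (l : list T) : nat := fold_right (fun w acc => f w + acc) 0 l.

Lemma sumf_app : forall T (f : T -> nat) l1 l2, sumf f (l1 ++ l2) = sumf f l1 + sumf f l2.
Proof. intros; induction l1; simpl; auto; unfold sumf in *; simpl; lia. Qed.

Lemma sumf_le : forall T (f g : T -> nat) l, (forall w, In w l -> f w <= g w) -> sumf f l <= sumf g l.
Proof.
  intros T f g l H. induction l; simpl; auto.
  unfold sumf in *; simpl.
  assert (f a <= g a) by (apply H; simpl; auto).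
  assert (fold_right (fun w acc => f w + acc) 0 l <= fold_right (fun w acc => g w + acc) 0 l)
    by (apply IHl; intros; apply H; simpl; auto). lia.
Qed.

Lemma sumf_lt : forall T (f g : T -> nat) l w0, (forall w, In w l -> f w <= g w) -> In w0 l -> f w0 < g w0 ->
  sumf f l < sumf g l.
Proof.
  intros T f g l w0 H Hin Hlt. induction l; simpl; [destruct Hin|].
  unfold sumf in *; simpl.
  assert (f a <= g a) by (apply H; simpl; auto).
  destruct Hin as [<-|Hin].
  - assert (fold_right (fun w acc => f w + acc) 0 l <= fold_right (fun w acc => g w + acc) 0 l)
      by (apply sumf_le; intros; apply H; simpl; auto). unfold sumf in *. lia.
  - assert (fold_right (fun w acc => f w + acc) 0 l < fold_right (fun w acc => g w + acc) 0 l)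
      by (apply IHl; auto; intros; apply H; simpl; auto). lia.
Qed.

Lemma sumf_zero : forall T (f : T -> nat) l, (forall w, In w l -> f w = 0) -> sumf f l = 0.
Proof.
  intros T f l H. induction l; simpl; auto. unfold sumf in *; simpl.
  rewrite H by (simpl; auto). rewrite IHl; auto. intros; apply H; simpl; auto.
Qed.

Lemma FOP_impl : forall (X : Type) (R R' : X -> X -> Prop) l,
  (forall u v, R u v -> R' u v) -> ForallOrdPairs R l -> ForallOrdPairs R' l.
Proof.
  intros X R R' l Hr Hf. induction Hf; constructor; auto.
  rewrite Forall_forall in *. auto.
Qed.


Lemma sub_role_inv : forall H R S0, sub_role H R S0 -> sub_role H (Inv R) (Inv S0).
Proof.
  intros H R S0 Hs. induction Hs.
  - apply rt_step. destruct H0; [right|left]; rewrite ?Inv_Inv; auto.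
  - apply rt_refl.
  - eapply rt_trans; eauto.
Qed.

Lemma sub_role_inRA : forall H A R S0, sub_role H R S0 -> in_RA H A S0 -> in_RA H A R.
Proof.
  intros H A R S0 Hs Hra. apply clos_rt_rt1n in Hs. destruct Hs; auto.
  destruct H0 as [Hi|Hi].
  - left. right. right. exists y. auto.
  - right. right. right. exists (Inv y). auto.
Qed.

Lemma roles_neg : forall R C, role_in_concept R (nnf_neg C) -> role_in_concept R C.
Proof.
  induction C; simpl; intros Hr; auto; try tauto.
  destruct n; simpl in Hr; tauto.
Qed.

Lemma in_closure_roles : forall C0 C R, in_closure C0 C -> role_in_concept R C -> role_in_concept R C0.
Proof.
  intros C0 C R Hc. induction Hc; intros Hr; auto.
  - apply IHHc. destruct C; simpl in *; try contradiction;
    repeat match goal with h : _ \/ _ |- _ => destruct h end; subst; tauto.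
  - apply IHHc. apply roles_neg; auto.
Qed.

Record ghost (Sx : Type) := MkG {
  gpi : nat -> Sx; gpar : nat -> nat; gdep : nat -> nat; gns : list nat; gdl : list nat }.
Arguments MkG {Sx}.
Arguments gpi {Sx}. Arguments gpar {Sx}. Arguments gdep {Sx}. Arguments gns {Sx}. Arguments gdl {Sx}.

Section Main.
Variable TN : nat -> Prop.
Variable H : role_hierarchy.
Variable A : abox.
Hypothesis hnnf : abox_nnf A.
Variable Sx : Type.
Variable L : Sx -> concept -> Prop.
Variable E : role -> Sx -> Sx -> Prop.
Variable I : nat -> Sx.
Hypothesis hT : is_tableau TN H A Sx L E I.

Lemma tclos : forall s C, L s C -> clos A C. Proof. apply hT. Qed.
Lemma tdom : forall R s t, E R s t -> in_RA H A R. Proof. apply hT. Qed.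
Lemma tP1 : forall s C, L s C -> ~ L s (CNot C). Proof. apply hT. Qed.
Lemma tP2 : forall s C1 C2, L s (CAnd C1 C2) -> L s C1 /\ L s C2. Proof. apply hT. Qed.
Lemma tP3 : forall s C1 C2, L s (COr C1 C2) -> L s C1 \/ L s C2. Proof. apply hT. Qed.
Lemma tP4 : forall s t S0 C, L s (CAll S0 C) -> E S0 s t -> L t C. Proof. apply hT. Qed.
Lemma tP5 : forall s S0 C, L s (CEx S0 C) -> exists t, E S0 s t /\ L t C. Proof. apply hT. Qed.
Lemma tP6 : forall s t R S0 C, L s (CAll S0 C) -> in_RA H A R -> E R s t ->
              sub_role H R S0 -> Trans TN R -> L t (CAll R C). Proof. apply hT. Qed.
Lemma tP7 : forall s t R, in_RA H A R -> (E R s t <-> E (Inv R) t s). Proof. apply hT. Qed.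
Lemma tP8 : forall s t R S0, in_RA H A S0 -> E R s t -> sub_role H R S0 -> E S0 s t. Proof. apply hT. Qed.
Lemma tP9 : forall s n S0 C, L s (CAtMost n S0 C) -> at_most n (fun t => E S0 s t /\ L t C). Proof. apply hT. Qed.
Lemma tP10 : forall s n S0 C, L s (CAtLeast n S0 C) -> at_least n (fun t => E S0 s t /\ L t C). Proof. apply hT. Qed.
Lemma tP11 : forall s t n S0 C, (L s (CAtMost n S0 C) \/ L s (CAtLeast n S0 C)) -> E S0 s t ->
              L t C \/ L t (nnf_neg C). Proof. apply hT. Qed.
Lemma tP12 : forall a C, In (AConcept a C) A -> L (I a) C. Proof. apply hT. Qed.
Lemma tP13 : forall a b R, In (ARole a b R) A -> E R (I a) (I b). Proof. apply hT. Qed.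
Lemma tP14 : forall a b, In (ANeq a b) A -> I a <> I b. Proof. apply hT. Qed.

Lemma L_inRA : forall s C R, L s C -> role_in_concept R C -> in_RA H A R.
Proof.
  intros s C R Hl Hr. destruct (tclos _ _ Hl) as [a [C0 [HA Hc]]].
  left. left. exists a, C0. split; auto. eapply in_closure_roles; eauto.
Qed.

Definition U := Ulist A.
Definition RL := RLlist H A.
Definition W := 2 * length U + 1.
Definition allTrip := list_prod (list_prod (allb (length U)) (allb (length U))) (allb (length RL)).
Definition Ntrip := length allTrip.
Definition Dmax := S Ntrip.
Definition Kv := S (S Dmax).

Definition ghostT := ghost Sx.

Record Invt (F : forest) (g : ghostT) : Prop := {
 iv_node : forall w, f_node F w <-> In w (gns g);
 iv_root : f_root F = ind_in A;
 iv_rootn : forall w, ind_in A w -> In w (gns g);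
 iv_lab : forall w C, f_lab F w C -> In w (gns g) /\ L (gpi g w) C;
 iv_elab : forall u v R, f_elab F u v R -> f_edge F u v /\ E R (gpi g u) (gpi g v);
 iv_edge : forall u v, f_edge F u v -> In u (gns g) /\ In v (gns g);
 iv_neq : forall u v, f_neq F u v -> f_neq F v u /\ gpi g u <> gpi g v /\ In u (gns g) /\ In v (gns g);
 iv_tree_r : forall u v, f_edge F u v -> ind_in A v -> ind_in A u /\ exists R, f_elab F u v R;
 iv_tree_n : forall u v, f_edge F u v -> ~ ind_in A v -> u = gpar g v;
 iv_par : forall v, In v (gns g) -> ~ ind_in A v ->
            f_edge F (gpar g v) v /\ gdep g v = S (gdep g (gpar g v));
 iv_dep0 : forall v, ind_in A v -> gdep g v = 0;
 iv_depb : forall v, In v (gns g) -> gdep g v <= Dmax;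
 iv_dead : forall d, In d (gdl g) -> ind_in A d /\ (forall C, ~ f_lab F d C) /\
             (forall u, ~ f_edge F u d /\ ~ f_edge F d u)
}.

Definition merged (F : forest) (g : ghostT) (w : nat) : Prop :=
  ~ ind_in A w /\ forall R, ~ f_elab F (gpar g w) w R.

Definition fired (F : forest) (w : nat) (D : concept) : Prop :=
  f_lab F w D /\
  match D with
  | CEx S0 C => exists z, S_nbr H F S0 w z /\ f_lab F z C
  | CAtLeast n S0 C => exists l, length l = n /\ ForallOrdPairs (f_neq F) l /\
                         forall y, In y l -> S_nbr H F S0 w y /\ f_lab F y C
  | _ => False
  end.

Definition prog (F : forest) (g : ghostT) (w : nat) : nat :=
  if excluded_middle_informative (merged F g w) then W
  else cnt (f_lab F w) U + cnt (fired F w) U.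

Definition live (g : ghostT) : nat := cnt (fun r => ~ In r (gdl g)) (indL A).

Definition lev (F : forest) (g : ghostT) (d : nat) : nat :=
  sumf (fun w => if Nat.eq_dec (gdep g w) d then W - prog F g w else 0) (gns g).

Definition mv (F : forest) (g : ghostT) (d : nat) : nat :=
  match d with 0 => live g | S d => lev F g d end.

Lemma lab_U : forall F g w C, Invt F g -> f_lab F w C -> In C U.
Proof.
  intros F g w C Hi Hl. apply (iv_lab _ _ Hi) in Hl. destruct Hl as [_ Hl].
  apply clos_U; auto. eapply tclos; eauto.
Qed.

Lemma elab_RL : forall F g u v R, Invt F g -> f_elab F u v R -> In R RL.
Proof.
  intros F g u v R Hi He. apply (iv_elab _ _ Hi) in He. destruct He as [_ He].
  apply in_RA_RL. eapply tdom; eauto.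
Qed.

Lemma prog_le : forall F g w, prog F g w <= W.
Proof.
  intros. unfold prog, W. destruct (excluded_middle_informative _); auto.
  pose proof (cnt_le _ (f_lab F w) U). pose proof (cnt_le _ (fired F w) U). lia.
Qed.

Lemma anc_props : forall F g a b, Invt F g -> ancestor F a b ->
  In a (gns g) /\ In b (gns g) /\ gdep g a <= gdep g b /\
  (ind_in A b -> ind_in A a) /\ (~ ind_in A b -> gdep g a < gdep g b).
Proof.
  intros F g a b Hi Ha. induction Ha as [u v He| x y z _ IH1 _ IH2].
  - destruct (iv_edge _ _ Hi _ _ He) as [Hu Hv].
    destruct (classic (ind_in A v)) as [Hr|Hr].
    + destruct (iv_tree_r _ _ Hi _ _ He Hr) as [Hur _].
      rewrite (iv_dep0 _ _ Hi _ Hr), (iv_dep0 _ _ Hi _ Hur). repeat split; auto; tauto.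
    + pose proof (iv_tree_n _ _ Hi _ _ He Hr) as ->.
      destruct (iv_par _ _ Hi _ Hv Hr) as [_ Hd]. repeat split; auto; try lia; tauto.
  - destruct IH1 as (h1&h2&h3&h4&h5). destruct IH2 as (k1&k2&k3&k4&k5).
    repeat split; auto; try lia.
    intros Hz. specialize (k5 Hz). lia.
Qed.

Lemma anc_irrefl : forall F g x, Invt F g -> ~ ind_in A x -> ~ ancestor F x x.
Proof. intros F g x Hi Hr Ha. apply (anc_props _ _ _ _ Hi) in Ha. destruct Ha as (_&_&_&_&h). specialize (h Hr). lia. Qed.

Lemma root_not_ib : forall F g x, Invt F g -> ind_in A x -> ~ indirectly_blocked F x.
Proof.
  intros F g x Hi Hr [[a [Ha Hb]]|[p [He Hn]]].
  - destruct (anc_props _ _ _ _ Hi Ha) as (_&_&_&h&_). apply h in Hr.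
    destruct Hb as [Hb _]. rewrite (iv_root _ _ Hi) in Hb. auto.
  - destruct (iv_tree_r _ _ Hi _ _ He Hr) as [_ [R HR]]. eapply Hn; eauto.
Qed.

Lemma merged_bsol : forall F g y, Invt F g -> In y (gns g) -> merged F g y -> blocked_sol F y.
Proof.
  intros F g y Hi Hy [Hr Hm]. rewrite <- (iv_root _ _ Hi) in Hr.
  split; auto. exists y. split; auto. split; auto. right.
  exists (gpar g y). split; auto. apply (iv_par _ _ Hi); auto. rewrite <- (iv_root _ _ Hi); auto.
Qed.

Lemma nib_unmerged : forall F g x, Invt F g -> In x (gns g) -> ~ indirectly_blocked F x -> ~ merged F g x.
Proof.
  intros F g x Hi Hx Hib Hm. apply Hib. right. exists (gpar g x). split.
  - apply (iv_par _ _ Hi); auto. apply Hm.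
  - apply Hm.
Qed.

Lemma nbr_cases : forall F S0 x y, S_nbr H F S0 x y ->
  (exists R, f_elab F x y R /\ sub_role H R S0) \/ (exists R, f_elab F y x R /\ sub_role H R (Inv S0)).
Proof. intros F S0 x y [[R [h1 h2]]|[R [h1 h2]]]; [left|right]; eauto. Qed.

Lemma nbr_nodes : forall F g S0 x y, Invt F g -> S_nbr H F S0 x y -> In x (gns g) /\ In y (gns g).
Proof.
  intros F g S0 x y Hi Hn. destruct (nbr_cases _ _ _ _ Hn) as [[R [He _]]|[R [He _]]];
  apply (iv_elab _ _ Hi) in He; destruct He as [He _]; apply (iv_edge _ _ Hi) in He; tauto.
Qed.

Lemma nbr_unmerged : forall F g S0 x y, Invt F g -> ~ indirectly_blocked F x -> S_nbr H F S0 x y ->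
  ~ merged F g y.
Proof.
  intros F g S0 x y Hi Hib Hn Hm. destruct (nbr_nodes _ _ _ _ _ Hi Hn) as [Hx Hy].
  destruct (nbr_cases _ _ _ _ Hn) as [[R [He _]]|[R [He _]]].
  - destruct Hm as [Hr Hm]. pose proof (proj1 (iv_elab _ _ Hi _ _ _ He)) as Hed.
    pose proof (iv_tree_n _ _ Hi _ _ Hed Hr) as ->. eapply Hm; eauto.
  - pose proof (proj1 (iv_elab _ _ Hi _ _ _ He)) as Hed.
    destruct (classic (ind_in A x)) as [Hxr|Hxr].
    + destruct Hm as [Hr _]. apply Hr. apply (iv_tree_r _ _ Hi _ _ Hed Hxr).
    + apply Hib. left. exists y. split.
      * apply t_step; auto.
      * eapply merged_bsol; eauto.
Qed.

Lemma nbrE : forall F g S0 x y, Invt F g -> S_nbr H F S0 x y -> in_RA H A S0 ->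
  E S0 (gpi g x) (gpi g y).
Proof.
  intros F g S0 x y Hi Hn Hra. destruct (nbr_cases _ _ _ _ Hn) as [[R [He Hs]]|[R [He Hs]]].
  - apply (iv_elab _ _ Hi) in He. destruct He as [_ He]. eapply tP8; eauto.
  - apply (iv_elab _ _ Hi) in He. destruct He as [_ He].
    assert (HR : in_RA H A R) by (eapply tdom; eauto).
    apply (tP7 _ _ _ HR) in He. apply sub_role_inv in Hs. rewrite Inv_Inv in Hs.
    eapply tP8; eauto.
Qed.


Definition trip (F : forest) (g : ghostT) (w : nat) :=
  (bits (f_lab F (gpar g w)) U, bits (f_lab F w) U, bits (f_elab F (gpar g w) w) RL).

Lemma trip_in : forall F g w, In (trip F g w) allTrip.
Proof.
  intros. unfold trip, allTrip. repeat apply in_prod;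
  match goal with |- In (bits ?P ?l) (allb (length ?l)) =>
    rewrite <- (length_map (fun c => dec (P c)) l); apply allb_ok end.
Qed.

Fixpoint chain (g : ghostT) (k : nat) (w : nat) : list nat :=
  match k with 0 => [] | S k => w :: chain g k (gpar g w) end.

Lemma chain_props : forall F g, Invt F g -> forall k w, In w (gns g) -> gdep g w = k ->
  (forall a, In a (chain g k w) -> In a (gns g) /\ ~ ind_in A a /\ (a = w \/ ancestor F a w) /\ gdep g a <= k) /\
  (forall a b, In a (chain g k w) -> In b (chain g k w) -> gdep g a < gdep g b -> ancestor F a b) /\
  (forall a b, In a (chain g k w) -> In b (chain g k w) -> gdep g a = gdep g b -> a = b) /\
  NoDup (chain g k w) /\ length (chain g k w) = k.
Proof.
  intros F g Hi k. induction k as [|k IH]; intros w Hw Hd.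
  - simpl. repeat split; try tauto; try constructor.
  - assert (Hnr : ~ ind_in A w) by (intros Hr; rewrite (iv_dep0 _ _ Hi _ Hr) in Hd; discriminate).
    destruct (iv_par _ _ Hi _ Hw Hnr) as [He Hdp].
    assert (Hpn : In (gpar g w) (gns g)) by (apply (iv_edge _ _ Hi _ _ He)).
    destruct (IH (gpar g w) Hpn ltac:(lia)) as (h1 & h2 & h3 & h4 & h5).
    simpl. split; [|split; [|split; [|split]]].
    + intros a [<-|Ha]; [repeat split; auto; lia|].
      destruct (h1 a Ha) as (a1 & a2 & a3 & a4). repeat split; auto; try lia.
      right. destruct a3 as [->|a3]; [apply t_step; auto| eapply t_trans; eauto; apply t_step; auto].
    + intros a b [<-|Ha] [<-|Hb] Hlt; try lia.
      * destruct (h1 b Hb) as (_&_&_&b4). lia.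
      * destruct (h1 a Ha) as (_&_&[->|a3]&_); [apply t_step; auto| eapply t_trans; eauto; apply t_step; auto].
      * auto.
    + intros a b [<-|Ha] [<-|Hb] Heq; auto.
      * destruct (h1 b Hb) as (_&_&_&b4). lia.
      * destruct (h1 a Ha) as (_&_&_&a4). lia.
    + constructor; auto. intros Hin. destruct (h1 w Hin) as (_&_&_&b4). lia.
    + rewrite h5. auto.
Qed.

Lemma bits_lab : forall F g u v, Invt F g -> bits (f_lab F u) U = bits (f_lab F v) U -> lab_eq F u v.
Proof.
  intros F g u v Hi Hb C. split; intros Hl.
  - apply (bits_eq _ _ _ _ Hb); auto. eapply lab_U; eauto.
  - apply (bits_eq _ _ _ _ Hb); auto. eapply lab_U; eauto.
Qed.

Lemma bits_elab : forall F g u v u' v', Invt F g -> bits (f_elab F u v) RL = bits (f_elab F u' v') RL ->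
  elab_eq F u v u' v'.
Proof.
  intros F g u v u' v' Hi Hb R. split; intros Hl.
  - apply (bits_eq _ _ _ _ Hb); auto. eapply elab_RL; eauto.
  - apply (bits_eq _ _ _ _ Hb); auto. eapply elab_RL; eauto.
Qed.

Lemma unblocked_depth : forall F g x, Invt F g -> In x (gns g) -> ~ blocked F x -> gdep g x <= Ntrip.
Proof.
  intros F g x Hi Hx Hnb.
  destruct (classic (ind_in A x)) as [Hr|Hr]; [rewrite (iv_dep0 _ _ Hi _ Hr); lia|].
  destruct (chain_props F g Hi (gdep g x) x Hx eq_refl) as (c1 & c2 & c3 & c4 & c5).
  set (ch := chain g (gdep g x) x) in *.
  destruct (classic (NoDup (map (trip F g) ch))) as [Hnd|Hnd].
  - unfold Ntrip. rewrite <- c5. rewrite <- (length_map (trip F g) ch).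
    apply NoDup_incl_length; auto. intros t Ht. apply in_map_iff in Ht.
    destruct Ht as [w [<- _]]. apply trip_in.
  - exfalso. destruct (notnodup_map _ _ _ _ c4 Hnd) as [a [b [Ha [Hb [Hab Htr]]]]].
    assert (key : forall a b, In a ch -> In b ch -> gdep g a < gdep g b -> trip F g a = trip F g b -> False).
    { clear a b Ha Hb Hab Htr. intros a b Ha Hb Hlt Htr.
      destruct (c1 a Ha) as (a1 & a2 & a3 & a4). destruct (c1 b Hb) as (b1 & b2 & b3 & b4).
      destruct (iv_par _ _ Hi _ a1 a2) as [ea _]. destruct (iv_par _ _ Hi _ b1 b2) as [eb _].
      assert (Hab : ancestor F a b) by auto.
      unfold trip in Htr. injection Htr as t1 t2 t3.
      assert (Hbc : block_cond F b).
      { exists (gpar g b), a, (gpar g a).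
        refine (conj _ (conj _ (conj _ (conj _ (conj _ (conj _ (conj _ (conj _ _)))))))).
        - apply t_step; auto.
        - auto.
        - eapply t_trans; [apply t_step; eauto| auto].
        - rewrite (iv_root _ _ Hi). auto.
        - auto.
        - auto.
        - apply (bits_lab F g); auto.
        - apply (bits_lab F g); auto.
        - apply (bits_elab F g); auto. }
      apply Hnb. split; [rewrite (iv_root _ _ Hi); auto|].
      destruct (classic (exists c, ancestor F c x /\ blocked_sol F c)) as [Hc|Hc].
      - right. left. auto.
      - left. split.
        + intros c Hcx Hcs. apply Hc. eauto.
        + destruct b3 as [<-|b3]; auto. exfalso. apply Hc. exists b. split; auto.
          split; [rewrite (iv_root _ _ Hi); auto|]. exists b. split; auto. split; auto.
          rewrite (iv_root _ _ Hi); auto. }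
    assert (gdep g a <> gdep g b) by (intros Heq; apply Hab; auto).
    destruct (Nat.lt_total (gdep g a) (gdep g b)) as [Hl|[Hl|Hl]]; [| contradiction |].
    + exact (key a b Ha Hb Hl Htr).
    + exact (key b a Hb Ha Hl (eq_sym Htr)).
Qed.


Lemma inv_clash_free : forall F g, Invt F g -> clash_free H F.
Proof.
  intros F g Hi x [[A0 [h1 h2]]|[n [S0 [C [hl [l [hlen [hfop hall]]]]]]]].
  - apply (iv_lab _ _ Hi) in h1. apply (iv_lab _ _ Hi) in h2.
    eapply tP1; [apply h1|apply h2].
  - apply (iv_lab _ _ Hi) in hl. destruct hl as [_ hl].
    assert (Hra : in_RA H A S0) by (eapply L_inRA; [exact hl| simpl; auto]).
    destruct (tP9 _ _ _ _ hl) as [lt [hle hin]].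
    assert (Hnd : NoDup (map (gpi g) l)).
    { apply (FOP_nodup_map _ _ (f_neq F)); auto.
      - intros u v Huv. apply (iv_neq _ _ Hi) in Huv. tauto.
      - intros u Huu. apply (iv_neq _ _ Hi) in Huu. tauto. }
    assert (Hinc : incl (map (gpi g) l) lt).
    { intros t Ht. apply in_map_iff in Ht. destruct Ht as [y [<- Hy]].
      destruct (hall y Hy) as [hn hc]. apply hin. split.
      - eapply nbrE; eauto.
      - apply (iv_lab _ _ Hi) in hc. tauto. }
    pose proof (NoDup_incl_length Hnd Hinc). rewrite length_map in H0. lia.
Qed.

Definition g0 : ghostT := MkG I (fun _ => 0) (fun _ => 0) (indL A) [].

Lemma ind_of_concept : forall a C, In (AConcept a C) A -> ind_in A a.
Proof. intros a C h. exists (AConcept a C). split; auto. Qed.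
Lemma ind_of_role1 : forall a b R, In (ARole a b R) A -> ind_in A a.
Proof. intros a b R h. exists (ARole a b R). split; simpl; auto. Qed.
Lemma ind_of_role2 : forall a b R, In (ARole a b R) A -> ind_in A b.
Proof. intros a b R h. exists (ARole a b R). split; simpl; auto. Qed.
Lemma ind_of_neq1 : forall a b, In (ANeq a b) A -> ind_in A a.
Proof. intros a b h. exists (ANeq a b). split; simpl; auto. Qed.
Lemma ind_of_neq2 : forall a b, In (ANeq a b) A -> ind_in A b.
Proof. intros a b h. exists (ANeq a b). split; simpl; auto. Qed.

Lemma init_inv : Invt (init_forest A) g0.
Proof.
  constructor; simpl.
  - intros; apply indL_ok.
  - reflexivity.
  - intros; apply indL_ok; auto.
  - intros w C h. split; [apply indL_ok; eapply ind_of_concept; eauto| apply tP12; auto].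
  - intros u v R h. split; [eauto| apply tP13; auto].
  - intros u v [R h]. split; apply indL_ok; [eapply ind_of_role1|eapply ind_of_role2]; eauto.
  - intros u v [h|h]; repeat split; auto.
    + apply tP14; auto.
    + apply indL_ok; eapply ind_of_neq1; eauto.
    + apply indL_ok; eapply ind_of_neq2; eauto.
    + intros e; symmetry in e; revert e; apply tP14; auto.
    + apply indL_ok; eapply ind_of_neq2; eauto.
    + apply indL_ok; eapply ind_of_neq1; eauto.
  - intros u v [R h] _. split; [eapply ind_of_role1; eauto| eauto].
  - intros u v [R h] hn. exfalso; apply hn. eapply ind_of_role2; eauto.
  - intros v hv hn. exfalso; apply hn. apply indL_ok; auto.
  - auto.
  - intros; lia.
  - intros d [].
Qed.

Lemma nbr_mono : forall F F', (forall u v R, f_elab F u v R -> f_elab F' u v R) ->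
  forall S0 x y, S_nbr H F S0 x y -> S_nbr H F' S0 x y.
Proof. intros F F' He S0 x y [[R [h1 h2]]|[R [h1 h2]]]; [left|right]; exists R; auto. Qed.

Lemma fired_mono : forall F F', (forall u v R, f_elab F u v R -> f_elab F' u v R) ->
  (forall u C, f_lab F u C -> f_lab F' u C) -> (forall u v, f_neq F u v -> f_neq F' u v) ->
  forall w D, fired F w D -> fired F' w D.
Proof.
  intros F F' He Hl Hn w D [h1 h2]. split; auto. destruct D; auto.
  - destruct h2 as [z [hz hc]]. exists z. split; auto. eapply nbr_mono; eauto.
  - destruct h2 as [l [hlen [hf hall]]]. exists l. split; auto. split.
    + eapply FOP_impl; [|exact hf]. auto.
    + intros y hy. destruct (hall y hy). split; auto. eapply nbr_mono; eauto.
Qed.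


Lemma prog_mono : forall F g F' g' w,
  (merged F g w -> merged F' g' w) -> (forall C, f_lab F w C -> f_lab F' w C) ->
  (~ merged F' g' w -> forall D, fired F w D -> fired F' w D) -> prog F g w <= prog F' g' w.
Proof.
  intros F g F' g' w Hm Hl Hf. unfold prog.
  destruct (excluded_middle_informative (merged F' g' w)) as [h'|h'].
  - pose proof (prog_le F g w) as hp. unfold prog in hp. auto.
  - destruct (excluded_middle_informative (merged F g w)) as [h|h]; [tauto|].
    pose proof (cnt_mono _ (f_lab F w) (f_lab F' w) U (fun x _ => Hl x)).
    pose proof (cnt_mono _ (fired F w) (fired F' w) U (fun x _ => Hf h' x)). lia.
Qed.

Lemma prog_strict_lab : forall F g F' g' w,
  (merged F g w -> merged F' g' w) -> (forall C, f_lab F w C -> f_lab F' w C) ->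
  (~ merged F' g' w -> forall D, fired F w D -> fired F' w D) -> ~ merged F' g' w ->
  (exists C, In C U /\ f_lab F' w C /\ ~ f_lab F w C) -> prog F g w < prog F' g' w.
Proof.
  intros F g F' g' w Hm Hl Hf h' Hex. unfold prog.
  destruct (excluded_middle_informative (merged F' g' w)) as [h''|_]; [tauto|].
  destruct (excluded_middle_informative (merged F g w)) as [h|h]; [tauto|].
  pose proof (cnt_strict _ (f_lab F w) (f_lab F' w) U (fun x _ => Hl x) Hex).
  pose proof (cnt_mono _ (fired F w) (fired F' w) U (fun x _ => Hf h' x)). lia.
Qed.

Lemma prog_strict_fired : forall F g F' g' w,
  (merged F g w -> merged F' g' w) -> (forall C, f_lab F w C -> f_lab F' w C) ->
  (~ merged F' g' w -> forall D, fired F w D -> fired F' w D) -> ~ merged F' g' w ->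
  (exists D, In D U /\ fired F' w D /\ ~ fired F w D) -> prog F g w < prog F' g' w.
Proof.
  intros F g F' g' w Hm Hl Hf h' Hex. unfold prog.
  destruct (excluded_middle_informative (merged F' g' w)) as [h''|_]; [tauto|].
  destruct (excluded_middle_informative (merged F g w)) as [h|h]; [tauto|].
  pose proof (cnt_mono _ (f_lab F w) (f_lab F' w) U (fun x _ => Hl x)).
  pose proof (cnt_strict _ (fired F w) (fired F' w) U (fun x _ => Hf h' x) Hex). lia.
Qed.

Lemma prog_strict_merge : forall F g F' g' w,
  ~ merged F g w -> merged F' g' w -> prog F g w < prog F' g' w.
Proof.
  intros F g F' g' w h h'. unfold prog.
  destruct (excluded_middle_informative (merged F' g' w)) as [_|h'']; [|tauto].
  destruct (excluded_middle_informative (merged F g w)) as [h''|_]; [tauto|].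
  pose proof (cnt_le _ (f_lab F w) U). pose proof (cnt_le _ (fired F w) U). unfold W. lia.
Qed.

Lemma meas_dec : forall F g F' g' new k w0,
  gns g' = gns g ++ new -> gdl g' = gdl g ->
  (forall w, In w (gns g) -> gdep g' w = gdep g w) ->
  (forall w, In w new -> gdep g' w = S k) ->
  (forall w, In w (gns g) -> prog F g w <= prog F' g' w) ->
  In w0 (gns g) -> prog F g w0 < prog F' g' w0 -> gdep g w0 <= k -> gdep g w0 <= Dmax ->
  Rk Kv (mv F' g') (mv F g).
Proof.
  intros F g F' g' new k w0 Hns Hdl Hdep Hdnew Hp Hw0 Hlt Hk HD.
  assert (Hlev : forall e, e <= gdep g w0 -> lev F' g' e <= lev F g e).
  { intros e He. unfold lev. rewrite Hns, sumf_app.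
    rewrite (sumf_zero _ _ new); [|intros w Hw; rewrite Hdnew by auto;
      destruct (Nat.eq_dec (S k) e); [lia|auto]].
    rewrite Nat.add_0_r. apply sumf_le. intros w Hw. rewrite Hdep by auto.
    destruct (Nat.eq_dec (gdep g w) e); auto. specialize (Hp w Hw). lia. }
  exists (S (gdep g w0)). split; [unfold Kv; lia|]. split.
  - simpl. unfold lev. rewrite Hns, sumf_app.
    rewrite (sumf_zero _ _ new); [|intros w Hw; rewrite Hdnew by auto;
      destruct (Nat.eq_dec (S k) (gdep g w0)); [lia|auto]].
    rewrite Nat.add_0_r. apply (sumf_lt _ _ _ _ w0); auto.
    + intros w Hw. rewrite Hdep by auto.
      destruct (Nat.eq_dec (gdep g w) (gdep g w0)); auto. specialize (Hp w Hw). lia.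
    + rewrite Hdep by auto. destruct (Nat.eq_dec (gdep g w0) (gdep g w0)); [|lia].
      pose proof (prog_le F' g' w0). lia.
  - intros d' Hd'. destruct d' as [|e]; simpl.
    + unfold live. rewrite Hdl. auto.
    + apply Hlev. lia.
Qed.


Lemma L_U : forall s C, L s C -> In C U.
Proof. intros s C h. apply clos_U; auto. eapply tclos; eauto. Qed.

Lemma lab_notdead : forall F g w C, Invt F g -> f_lab F w C -> ~ In w (gdl g).
Proof. intros F g w C Hi Hl Hd. apply (iv_dead _ _ Hi) in Hd. destruct Hd as [_ [h _]]. eapply h; eauto. Qed.

Lemma elab_notdead : forall F g u v R, Invt F g -> f_elab F u v R -> ~ In u (gdl g) /\ ~ In v (gdl g).
Proof.
  intros F g u v R Hi He. apply (iv_elab _ _ Hi) in He. destruct He as [He _].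
  split; intros Hd; apply (iv_dead _ _ Hi) in Hd; destruct Hd as [_ [_ h]].
  - apply (proj2 (h v)); auto.
  - apply (proj1 (h u)); auto.
Qed.

Lemma nbr_notdead : forall F g S0 x y, Invt F g -> S_nbr H F S0 x y -> ~ In y (gdl g).
Proof.
  intros F g S0 x y Hi Hn. destruct (nbr_cases _ _ _ _ Hn) as [[R [He _]]|[R [He _]]];
  apply (elab_notdead _ _ _ _ _ Hi) in He; tauto.
Qed.

Lemma label_step : forall F g y P, Invt F g -> In y (gns g) -> ~ In y (gdl g) ->
  (forall D, P D -> L (gpi g y) D) -> ~ merged F g y -> (exists D, P D /\ ~ f_lab F y D) ->
  Invt (add_labels F y P) g /\ Rk Kv (mv (add_labels F y P) g) (mv F g).
Proof.
  intros F g y P Hi Hy Hyd HP Hm Hex.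
  assert (Hi' : Invt (add_labels F y P) g).
  { destruct Hi; constructor; simpl; auto.
    - intros w C [h|[-> h]]; [apply iv_lab0; auto| split; auto].
    - intros d Hd. destruct (iv_dead0 d Hd) as (h1 & h2 & h3).
      split; [auto|split; [intros C [h|[-> h]]; [eapply h2; eauto|auto] | apply h3]]. }
  split; auto.
  assert (Hmono : forall w, (merged F g w -> merged (add_labels F y P) g w) /\
     (forall C, f_lab F w C -> f_lab (add_labels F y P) w C) /\
     (~ merged (add_labels F y P) g w -> forall D, fired F w D -> fired (add_labels F y P) w D)).
  { intros w. split; [intros h; exact h|]. split; [intros C h; simpl; auto|].
    intros _ D. apply fired_mono; simpl; auto. }
  apply (meas_dec F g _ g [] (gdep g y) y); auto.
  - rewrite app_nil_r; auto.
  - intros w [].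
  - intros w _. destruct (Hmono w) as (a & b & c). apply prog_mono; auto.
  - destruct (Hmono y) as (a & b & c). apply prog_strict_lab; auto.
    destruct Hex as [D [hD hn]]. exists D. split; [eapply L_U; eauto|]. simpl; auto.
  - apply (iv_depb _ _ Hi); auto.
Qed.


Definition inr (base n w : nat) : bool := (base <=? w) && (w <? base + n).

Lemma inr_true : forall base n w, inr base n w = true <-> In w (seq base n).
Proof.
  intros. unfold inr. rewrite in_seq, Bool.andb_true_iff, Nat.leb_le, Nat.ltb_lt. tauto.
Qed.

Lemma inr_false : forall base n w, w < base -> inr base n w = false.
Proof. intros. unfold inr. apply Bool.andb_false_iff. left. apply Nat.leb_gt. auto. Qed.

Definition gen_ghost (g : ghostT) (x base n : nat) (ts : list Sx) : ghostT :=
  MkG (fun w => if inr base n w then nth (w - base) ts (gpi g x) else gpi g w)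
      (fun w => if inr base n w then x else gpar g w)
      (fun w => if inr base n w then S (gdep g x) else gdep g w)
      (gns g ++ seq base n) (gdl g).

Lemma not_blocked_nib : forall F g x, Invt F g -> ~ blocked F x -> ~ indirectly_blocked F x.
Proof.
  intros F g x Hi Hb Hib. destruct (classic (ind_in A x)) as [Hr|Hr].
  - eapply root_not_ib; eauto.
  - apply Hb. split; [rewrite (iv_root _ _ Hi); auto| right; auto].
Qed.

Lemma gen_step : forall F g x S0 C base n ts pw D,
  Invt F g -> In x (gns g) -> ~ blocked F x -> (forall w, In w (gns g) -> w < base) ->
  length ts = n -> (forall t, In t ts -> E S0 (gpi g x) t /\ L t C) -> (pw = true -> NoDup ts) ->
  f_lab F x D -> ~ fired F x D -> fired (new_succs F x (seq base n) S0 C pw) x D ->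
  Invt (new_succs F x (seq base n) S0 C pw) (gen_ghost g x base n ts) /\
  Rk Kv (mv (new_succs F x (seq base n) S0 C pw) (gen_ghost g x base n ts)) (mv F g).
Proof.
  intros F g x S0 C base n ts pw D Hi Hx Hb Hbase Hlen Hts Hnd HD Hnf Hf.
  set (ys := seq base n) in *.
  set (g' := gen_ghost g x base n ts).
  set (F' := new_succs F x ys S0 C pw).
  assert (Hold : forall w, In w (gns g) -> inr base n w = false) by (intros; apply inr_false; auto).
  assert (Hnew : forall w, In w ys -> inr base n w = true) by (intros; apply inr_true; auto).
  assert (Hnotold : forall w, In w ys -> ~ In w (gns g)).
  { intros w Hw Hw'. apply Hnew in Hw. rewrite Hold in Hw; auto. discriminate. }
  assert (Hpi_old : forall w, In w (gns g) -> gpi g' w = gpi g w).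
  { intros w Hw. simpl. rewrite Hold; auto. }
  assert (Hpi_new : forall w, In w ys -> In (gpi g' w) ts).
  { intros w Hw. simpl. rewrite Hnew; auto. apply nth_In. apply in_seq in Hw. lia. }
  assert (Hdx : gdep g x <= Ntrip) by (eapply unblocked_depth; eauto).
  assert (Hxd : ~ In x (gdl g)) by (eapply lab_notdead; eauto).
  assert (Hi' : Invt F' g').
  { destruct Hi as [i1 i2 i3 i4 i5 i6 i7 i8 i9 i10 i11 i12 i13]. constructor; simpl.
    - intros w. rewrite i1, in_app_iff. tauto.
    - auto.
    - intros w Hw. apply in_or_app; auto.
    - intros w C' [h|[hw ->]].
      + destruct (i4 _ _ h) as [a b]. split; [apply in_or_app; auto|].
        rewrite Hold; auto.
      + split; [apply in_or_app; auto|]. apply Hts. apply Hpi_new; auto.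
    - intros u v R [h|[-> [hv ->]]].
      + destruct (i5 _ _ _ h) as [a b]. destruct (i6 _ _ a) as [hu hv].
        split; auto. rewrite !Hold; auto.
      + split; auto. rewrite (Hold x Hx). apply Hts. apply Hpi_new; auto.
    - intros u v [h|[-> hv]].
      + destruct (i6 _ _ h). split; apply in_or_app; auto.
      + split; apply in_or_app; auto.
    - intros u v [h|h].
      + destruct (i7 _ _ h) as (a & b & c & d). repeat split; auto; try (apply in_or_app; auto).
        rewrite !Hold; auto.
      + destruct pw; [|contradiction]. destruct h as (hu & hv & hne).
        repeat split; auto; try (apply in_or_app; auto).
        rewrite !Hnew by auto.
        pose proof (Hnd eq_refl) as Hndt.
        apply in_seq in hu. apply in_seq in hv.
        intros Heq. apply (NoDup_nth ts (gpi g x)) in Heq; auto; lia.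
    - intros u v [h|[-> hv]] Hr.
      + destruct (i8 _ _ h Hr) as [a [R b]]. split; auto. exists R; auto.
      + exfalso. apply (Hnotold v); auto.
    - intros u v [h|[-> hv]] Hr.
      + destruct (i6 _ _ h) as [_ hv]. rewrite Hold; auto.
      + rewrite Hnew; auto.
    - intros v Hv Hr. apply in_app_or in Hv. destruct Hv as [Hv|Hv].
      + destruct (i10 _ Hv Hr) as [a b]. rewrite (Hold v Hv).
        pose proof (proj1 (i6 _ _ a)) as hp. rewrite (Hold _ hp). auto.
      + rewrite (Hnew v Hv). rewrite (Hold x Hx). auto.
    - intros v Hr. rewrite Hold; auto.
    - intros v Hv. apply in_app_or in Hv. destruct Hv as [Hv|Hv].
      + rewrite Hold; auto.
      + rewrite Hnew; auto. unfold Dmax. lia.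
    - intros d Hd. destruct (i13 d Hd) as (h1 & h2 & h3).
      split; [auto|split].
      + intros C' [h|[hd _]]; [eapply h2; eauto|]. apply (Hnotold d); auto.
      + intros u. split.
        * intros [h|[_ hd]]; [apply (proj1 (h3 u)); auto|]. apply (Hnotold d); auto.
        * intros [h|[-> _]]; [apply (proj2 (h3 u)); auto| auto]. }
  split; auto.
  assert (Hmono : forall w, In w (gns g) -> (merged F g w -> merged F' g' w) /\
     (forall C, f_lab F w C -> f_lab F' w C) /\
     (~ merged F' g' w -> forall D, fired F w D -> fired F' w D)).
  { intros w Hw. split; [|split].
    - intros [hr hm]. split; auto. simpl. rewrite Hold; auto.
      intros R [h|[_ [h _]]]; [eapply hm; eauto| apply (Hnotold w); auto].
    - intros C' h; simpl; auto.
    - intros _ D'. apply fired_mono; simpl; auto. }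
  apply (meas_dec F g F' g' ys (gdep g x) x); auto.
  - intros w Hw. simpl. rewrite Hold; auto.
  - intros w Hw. simpl. rewrite Hnew; auto.
  - intros w Hw. destruct (Hmono w Hw) as (a & b & c). apply prog_mono; auto.
  - destruct (Hmono x Hx) as (a & b & c). apply prog_strict_fired; auto.
    + intros [hr hm]. apply (nib_unmerged F g x Hi Hx (not_blocked_nib F g x Hi Hb)).
      split; auto. intros R h. apply (hm R). simpl. rewrite Hold; auto.
    + exists D. split; [eapply lab_U; eauto| split; auto].
  - apply (iv_depb _ _ Hi); auto.
Qed.


Definition le_forest (F : forest) (x y z : nat) : forest :=
  MkForest (f_node F) (f_root F)
    (fun u D => f_lab F u D \/ (u = z /\ f_lab F y D))
    (fun u v => f_edge F u v \/ (ancestor F z x /\ u = z /\ v = x))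
    (fun u v R =>
       (f_elab F u v R /\ ~ (u = x /\ v = y)) \/
       (ancestor F z x /\ u = z /\ v = x /\ exists R', f_elab F x y R' /\ R = Inv R') \/
       (~ ancestor F z x /\ u = x /\ v = z /\ f_elab F x y R))
    (fun u v => f_neq F u v \/ (v = z /\ f_neq F u y) \/ (u = z /\ f_neq F v y))
    (f_eq F).

Lemma no_two_way : forall F g x y, Invt F g -> f_edge F x y -> f_edge F y x -> ~ ind_in A y -> False.
Proof.
  intros F g x y Hi Exy Eyx Hy.
  destruct (classic (ind_in A x)) as [Hx|Hx].
  - apply Hy. apply (iv_tree_r _ _ Hi _ _ Eyx Hx).
  - pose proof (iv_tree_n _ _ Hi _ _ Exy Hy) as e1. pose proof (iv_tree_n _ _ Hi _ _ Eyx Hx) as e2.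
    destruct (iv_edge _ _ Hi _ _ Exy) as [hx hy].
    destruct (iv_par _ _ Hi _ hx Hx) as [_ d1]. destruct (iv_par _ _ Hi _ hy Hy) as [_ d2].
    rewrite <- e1 in d2. rewrite <- e2 in d1. lia.
Qed.

Lemma le_step : forall F g x S0 y z,
  Invt F g -> ~ indirectly_blocked F x -> ~ In x (gdl g) ->
  S_nbr H F S0 x y -> S_nbr H F S0 x z -> y <> z -> ~ f_neq F y z -> ~ ind_in A y ->
  ~ ancestor F y z -> gpi g y = gpi g z ->
  Invt (le_forest F x y z) g /\ Rk Kv (mv (le_forest F x y z) g) (mv F g).
Proof.
  intros F g x S0 y z Hi Hib Hxd Hny Hnz Hyz Hneq Hyr Hanc Hpi.
  destruct (nbr_nodes _ _ _ _ _ Hi Hny) as [Hx Hy].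
  destruct (nbr_nodes _ _ _ _ _ Hi Hnz) as [_ Hz].
  assert (s1 : gpar g y = x /\ exists R', f_elab F x y R').
  { destruct (nbr_cases _ _ _ _ Hny) as [[R [He _]]|[R [He _]]].
    - split; [|eauto]. symmetry. apply (iv_tree_n _ _ Hi); auto. apply (iv_elab _ _ Hi _ _ _ He).
    - exfalso. pose proof (proj1 (iv_elab _ _ Hi _ _ _ He)) as Eyx.
      destruct (classic (ind_in A x)) as [Hxr|Hxr].
      + apply Hyr. apply (iv_tree_r _ _ Hi _ _ Eyx Hxr).
      + pose proof (iv_tree_n _ _ Hi _ _ Eyx Hxr) as e.
        destruct (nbr_cases _ _ _ _ Hnz) as [[R2 [He2 _]]|[R2 [He2 _]]].
        * apply Hanc. eapply t_trans; apply t_step; [exact Eyx| apply (iv_elab _ _ Hi _ _ _ He2)].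
        * apply Hyz. rewrite e. symmetry. apply (iv_tree_n _ _ Hi); auto. apply (iv_elab _ _ Hi _ _ _ He2). }
  destruct s1 as [Hpy [R' HR']].
  assert (Exy : f_edge F x y) by (apply (iv_elab _ _ Hi _ _ _ HR')).
  assert (Hxy : x <> y).
  { intros <-. destruct (iv_par _ _ Hi _ Hy Hyr) as [_ d]. rewrite Hpy in d. lia. }
  assert (Hmx : ~ merged F g x) by (apply nib_unmerged; auto).
  assert (Hmz : ~ merged F g z) by (eapply nbr_unmerged; eauto).
  assert (Hzd : ~ In z (gdl g)) by (eapply nbr_notdead; eauto).
  assert (s_anc : ancestor F z x -> ~ ind_in A x -> gpar g x = z).
  { intros Ha Hxr. destruct (nbr_cases _ _ _ _ Hnz) as [[R2 [He2 _]]|[R2 [He2 _]]].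
    - exfalso. apply (anc_irrefl F g x Hi Hxr). eapply t_trans; [apply t_step; apply (iv_elab _ _ Hi _ _ _ He2)| exact Ha].
    - symmetry. apply (iv_tree_n _ _ Hi); auto. apply (iv_elab _ _ Hi _ _ _ He2). }
  assert (s_nanc : ~ ancestor F z x -> f_edge F x z).
  { intros Ha. destruct (nbr_cases _ _ _ _ Hnz) as [[R2 [He2 _]]|[R2 [He2 _]]].
    - apply (iv_elab _ _ Hi _ _ _ He2).
    - exfalso. apply Ha. apply t_step. apply (iv_elab _ _ Hi _ _ _ He2). }
  set (F' := le_forest F x y z).
  assert (Hi' : Invt F' g).
  { destruct Hi as [i1 i2 i3 i4 i5 i6 i7 i8 i9 i10 i11 i12 i13]. constructor; simpl; auto.
    - intros w D [h|[-> h]]; auto. destruct (i4 _ _ h). split; auto. rewrite <- Hpi; auto.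
    - intros u v R [[h _]|[[ha [-> [-> [R1 [h ->]]]]]|[ha [-> [-> h]]]]].
      + destruct (i5 _ _ _ h). auto.
      + split; [right; auto|]. destruct (i5 _ _ _ h) as [_ e].
        apply (tP7 _ _ _ (tdom _ _ _ e)) in e. rewrite <- Hpi. auto.
      + split; [left; auto|]. destruct (i5 _ _ _ h) as [_ e]. rewrite <- Hpi. auto.
    - intros u v [h|[_ [-> ->]]]; auto.
    - intros u v [h|[[-> h]|[-> h]]].
      + destruct (i7 _ _ h) as (a & b & c & d). repeat split; auto.
      + destruct (i7 _ _ h) as (a & b & c & d). repeat split; auto. rewrite <- Hpi; auto.
      + destruct (i7 _ _ h) as (a & b & c & d). repeat split; auto. rewrite <- Hpi; auto.
    - intros u v [h|[ha [-> ->]]] Hr.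
      + destruct (i8 _ _ h Hr) as [a [R b]]. split; auto. exists R. left. split; auto.
        intros [_ ->]. auto.
      + split.
        * destruct (anc_props F g z x (Build_Invt _ _ i1 i2 i3 i4 i5 i6 i7 i8 i9 i10 i11 i12 i13) ha) as (_&_&_&k&_). auto.
        * exists (Inv R'). right. left. repeat split; auto. eauto.
    - intros u v [h|[ha [-> ->]]] Hr; auto. symmetry. apply s_anc; auto.
    - intros v Hv Hr. destruct (i10 v Hv Hr). auto.
    - intros d Hd. destruct (i13 d Hd) as (h1 & h2 & h3). split; [auto|split].
      + intros D [h|[-> _]]; [eapply h2; eauto| auto].
      + intros u. split.
        * intros [h|[_ [_ ->]]]; [apply (proj1 (h3 u)); auto| auto].
        * intros [h|[_ [-> _]]]; [apply (proj2 (h3 u)); auto| auto]. }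
  split; auto.
  assert (Hmy' : merged F' g y).
  { split; auto. rewrite Hpy. simpl. intros R [[_ h]|[[_ [h1 [h2 _]]]|[_ [_ [h _]]]]].
    - auto.
    - apply Hxy. congruence.
    - auto. }
  assert (Hnb : forall S1 w v, S_nbr H F S1 w v -> w <> y ->
            (w = x /\ v = y -> S_nbr H F' S1 x z) /\ (~ (w = x /\ v = y) -> S_nbr H F' S1 w v)).
  { intros S1 w v Hn Hwy. destruct (nbr_cases _ _ _ _ Hn) as [[R [He Hs]]|[R [He Hs]]].
    - split.
      + intros [-> ->]. destruct (classic (ancestor F z x)) as [Ha|Ha].
        * right. exists (Inv R). split; [right; left; repeat split; eauto|].
          apply sub_role_inv; auto.
        * left. exists R. split; auto. right. right. auto.
      + intros Hn'. left. exists R. split; auto. left. auto.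
    - split.
      + intros [-> ->]. exfalso. eapply (no_two_way F g x y Hi Exy); eauto.
        apply (iv_elab _ _ Hi _ _ _ He).
      + intros _. right. exists R. split; auto. left. split; auto. intros [_ ->]. auto. }
  assert (Hmono : forall w, In w (gns g) -> (merged F g w -> merged F' g w) /\
     (forall C, f_lab F w C -> f_lab F' w C) /\
     (~ merged F' g w -> forall D, fired F w D -> fired F' w D)).
  { intros w Hw. split; [|split].
    - intros [hr hm]. split; auto. simpl.
      intros R [[h _]|[[_ [h1 [h2 _]]]|[_ [h1 [h2 _]]]]].
      + eapply hm; eauto.
      + subst w. apply Hmx. split; auto.
      + subst w. apply Hmz. split; auto.
    - intros C' h; simpl; auto.
    - intros Hmw D [hD hf]. assert (Hwy : w <> y) by (intros ->; auto).
      split; [simpl; auto|]. destruct D; auto.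
      + destruct hf as [v [hv hc]].
        destruct (classic (w = x /\ v = y)) as [[-> ->]|Hc].
        * exists z. split; [apply (proj1 (Hnb _ _ _ hv Hwy)); auto| simpl; auto].
        * exists v. split; [apply (proj2 (Hnb _ _ _ hv Hwy)); auto| simpl; auto].
      + destruct hf as [l [hlen [hfop hall]]].
        destruct (classic (w = x)) as [->|Hwx].
        * exists (map (fun v => if Nat.eq_dec v y then z else v) l). split; [rewrite length_map; auto|split].
          -- apply (FOP_map _ (f_neq F)); auto. intros u v _ _ huv. simpl.
             destruct (Nat.eq_dec u y) as [->|hu]; destruct (Nat.eq_dec v y) as [->|hv].
             ++ apply (iv_neq _ _ Hi) in huv. tauto.
             ++ right. right. split; auto. apply (iv_neq _ _ Hi) in huv. tauto.
             ++ right. left. auto.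
             ++ left. auto.
          -- intros v' Hv'. apply in_map_iff in Hv'. destruct Hv' as [v [<- Hv]].
             destruct (hall v Hv) as [hn hc].
             destruct (Nat.eq_dec v y) as [->|hv].
             ++ split; [apply (proj1 (Hnb _ _ _ hn Hwy)); auto| simpl; auto].
             ++ split; [apply (proj2 (Hnb _ _ _ hn Hwy)); tauto| simpl; auto].
        * exists l. split; auto. split.
          -- eapply FOP_impl; [|exact hfop]. simpl; auto.
          -- intros v Hv. destruct (hall v Hv) as [hn hc].
             split; [apply (proj2 (Hnb _ _ _ hn Hwy)); tauto| simpl; auto]. }
  apply (meas_dec F g F' g [] (gdep g y) y); auto.
  - rewrite app_nil_r; auto.
  - intros w [].
  - intros w Hw. destruct (Hmono w Hw) as (a & b & c). apply prog_mono; auto.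
  - apply prog_strict_merge; auto. intros [_ hm]. rewrite Hpy in hm. eapply hm; eauto.
  - apply (iv_depb _ _ Hi); auto.
Qed.


Definition ler_forest (F : forest) (y z : nat) : forest :=
  MkForest (f_node F) (f_root F)
    (fun u D => (f_lab F u D \/ (u = z /\ f_lab F y D)) /\ u <> y)
    (fun u v => ((f_edge F u v \/ (u = z /\ f_edge F y v)) \/
                 (v = z /\ (f_edge F u y \/ (u = z /\ f_edge F y y)))) /\ u <> y /\ v <> y)
    (fun u v R => ((f_elab F u v R \/ (u = z /\ f_elab F y v R)) \/
                   (v = z /\ (f_elab F u y R \/ (u = z /\ f_elab F y y R)))) /\ u <> y /\ v <> y)
    (fun u v => f_neq F u v \/ (v = z /\ f_neq F u y) \/ (u = z /\ f_neq F v y))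
    (fun u v => f_eq F u v \/ (u = y /\ v = z) \/ (u = z /\ v = y)).

Definition ler_ghost (g : ghostT) (y z : nat) : ghostT :=
  MkG (gpi g) (fun w => if Nat.eq_dec (gpar g w) y then z else gpar g w) (gdep g) (gns g) (y :: gdl g).

Lemma ler_step : forall F g y z C1 C2,
  Invt F g -> ind_in A y -> ind_in A z -> y <> z -> f_lab F y C1 -> f_lab F z C2 ->
  gpi g y = gpi g z ->
  Invt (ler_forest F y z) (ler_ghost g y z) /\ Rk Kv (mv (ler_forest F y z) (ler_ghost g y z)) (mv F g).
Proof.
  intros F g y z C1 C2 Hi Hy Hz Hyz Hly Hlz Hpi.
  assert (Hyd : ~ In y (gdl g)) by (eapply lab_notdead; eauto).
  assert (Hzd : ~ In z (gdl g)) by (eapply lab_notdead; eauto).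
  assert (Hzy : z <> y) by auto.
  split.
  - destruct Hi as [i1 i2 i3 i4 i5 i6 i7 i8 i9 i10 i11 i12 i13]. constructor; simpl; auto.
    + intros w D [[h|[-> h]] hw]; auto. destruct (i4 _ _ h). split; auto. rewrite <- Hpi; auto.
    + intros u v R [[[h|[-> h]]|[-> [h|[-> h]]]] [hu hv]];
        destruct (i5 _ _ _ h) as [e1 e2]; (split; [split; [|split]; auto|]); auto;
        rewrite <- ?Hpi; auto.
    + intros u v [[[h|[-> h]]|[-> [h|[-> h]]]] [hu hv]]; destruct (i6 _ _ h); split; auto.
    + intros u v [h|[[-> h]|[-> h]]].
      * destruct (i7 _ _ h) as (a & b & c & d). repeat split; auto.
      * destruct (i7 _ _ h) as (a & b & c & d). repeat split; auto. rewrite <- Hpi; auto.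
      * destruct (i7 _ _ h) as (a & b & c & d). repeat split; auto. rewrite <- Hpi; auto.
    + intros u v [[[h|[-> h]]|[-> [h|[-> h]]]] [hu hv]] Hr.
      * destruct (i8 _ _ h Hr) as [a [R b]]. split; auto. exists R. split; auto.
      * destruct (i8 _ _ h Hr) as [a [R b]]. split; auto. exists R. split; auto.
      * destruct (i8 _ _ h Hy) as [a [R b]]. split; auto. exists R. split; auto.
      * destruct (i8 _ _ h Hy) as [a [R b]]. split; auto. exists R. split; auto.
    + intros u v [[[h|[-> h]]|[-> [h|[-> h]]]] [hu hv]] Hr.
      * pose proof (i9 _ _ h Hr) as e. rewrite <- e. destruct (Nat.eq_dec u y); congruence.
      * pose proof (i9 _ _ h Hr) as e. rewrite <- e. destruct (Nat.eq_dec y y); congruence.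
      * contradiction.
      * contradiction.
    + intros v Hv Hr. destruct (i10 v Hv Hr) as [e d].
      assert (v <> y) by (intros ->; auto).
      destruct (Nat.eq_dec (gpar g v) y) as [e'|e'].
      * rewrite e' in e, d. split; [split; [left; right; auto| auto]|].
        rewrite d, (i11 y Hy), (i11 z Hz). auto.
      * split; [split; [left; left; auto| auto]| auto].
    + intros d [<-|Hd].
      * split; auto. split; [intros D [_ h]; auto|]. intros u; split; intros [_ [h1 h2]]; auto.
      * destruct (i13 d Hd) as (h1 & h2 & h3). split; [auto|split].
        -- intros D [[h|[-> _]] _]; [eapply h2; eauto| auto].
        -- intros u. split.
           ++ intros [[[h|[_ h]]|[-> _]] _]; [apply (proj1 (h3 u)); auto| apply (proj1 (h3 y)); auto| auto].
           ++ intros [[[h|[-> _]]|[_ [h|[-> _]]]] _]; [apply (proj2 (h3 u)); auto| auto| apply (proj2 (h3 y)); auto| auto].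
  - exists 0. split; [unfold Kv; lia|]. split; [|intros; lia].
    simpl. unfold live. simpl. apply cnt_strict.
    + intros r _ h1 h2. apply h1. right. auto.
    + exists y. split; [apply indL_ok; auto|]. split; [auto| simpl; tauto].
Qed.


Definition fresh_base (l : list nat) : nat := S (fold_right max 0 l).

Lemma fresh_base_ok : forall l w, In w l -> w < fresh_base l.
Proof.
  intros l w Hw. unfold fresh_base. induction l; simpl in *; [destruct Hw|].
  destruct Hw as [->|Hw]; [lia|]. specialize (IHl Hw). lia.
Qed.

Lemma root_of_two_roots : forall F g S0 x y z, Invt F g -> S_nbr H F S0 x y -> S_nbr H F S0 x z ->
  y <> z -> ind_in A y -> ind_in A z -> ind_in A x.
Proof.
  intros F g S0 x y z Hi Hny Hnz Hyz Hy Hz. apply NNPP. intros Hx.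
  assert (key : forall r, S_nbr H F S0 x r -> ind_in A r -> r = gpar g x).
  { intros r Hn Hr. destruct (nbr_cases _ _ _ _ Hn) as [[R [He _]]|[R [He _]]].
    - exfalso. apply Hx. apply (iv_tree_r _ _ Hi x r); auto. apply (iv_elab _ _ Hi _ _ _ He).
    - apply (iv_tree_n _ _ Hi); auto. apply (iv_elab _ _ Hi _ _ _ He). }
  apply Hyz. rewrite (key y), (key z); auto.
Qed.

Lemma merge_exists : forall F g x n S0 C, Invt F g -> f_lab F x (CAtMost n S0 C) ->
  ~ indirectly_blocked F x -> card_gt n (fun w => S_nbr H F S0 x w /\ f_lab F w C) ->
  exists F' g', rule_step TN H F F' /\ Invt F' g' /\ Rk Kv (mv F' g') (mv F g).
Proof.
  intros F g x n S0 C Hi Hl Hib Hcard.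
  pose proof Hcard as [l [Hnd [Hlen Hall]]].
  destruct (iv_lab _ _ Hi _ _ Hl) as [Hx HL].
  assert (Hra : in_RA H A S0) by (eapply L_inRA; [exact HL| simpl; auto]).
  destruct (tP9 _ _ _ _ HL) as [lt [hle hin]].
  assert (Hnnd : ~ NoDup (map (gpi g) l)).
  { intros Hnd2. assert (Hinc : incl (map (gpi g) l) lt).
    { intros t Ht. apply in_map_iff in Ht. destruct Ht as [w [<- Hw]].
      destruct (Hall w Hw) as [hn hc]. apply hin. split; [eapply nbrE; eauto|].
      apply (iv_lab _ _ Hi) in hc. tauto. }
    pose proof (NoDup_incl_length Hnd2 Hinc). rewrite length_map in H0. lia. }
  destruct (notnodup_map _ _ _ _ Hnd Hnnd) as [a [b [Ha [Hb [Hab Hpi]]]]].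
  destruct (Hall a Ha) as [Hna Hca]. destruct (Hall b Hb) as [Hnb Hcb].
  assert (Hneq : forall u v, gpi g u = gpi g v -> ~ f_neq F u v).
  { intros u v e h. apply (iv_neq _ _ Hi) in h. tauto. }
  assert (Hxd : ~ In x (gdl g)) by (eapply lab_notdead; eauto).
  assert (Hroot := iv_root _ _ Hi).
  destruct (classic (ind_in A a /\ ind_in A b)) as [[Hra' Hrb']|Hnr].
  - exists (ler_forest F a b), (ler_ghost g a b).
    destruct (ler_step F g a b C C Hi Hra' Hrb' Hab Hca Hcb Hpi) as [h1 h2].
    split; auto. apply (r_ler TN H F x n S0 C a b); auto; rewrite Hroot; auto.
  - assert (Hor : exists y z, ((y = a /\ z = b) \/ (y = b /\ z = a)) /\ ~ ind_in A y /\ ~ ancestor F y z).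
    { destruct (classic (ind_in A a)) as [Hra'|Hra'].
      - exists b, a. split; auto. split; [tauto|].
        intros Hanc. destruct (anc_props _ _ _ _ Hi Hanc) as (_&_&_&k&_). tauto.
      - destruct (classic (ancestor F a b)) as [Hanc|Hanc]; [|exists a, b; auto].
        exists b, a. destruct (anc_props _ _ _ _ Hi Hanc) as (_&_&_&k&_).
        split; auto. split; [tauto|]. intros Hba. apply (anc_irrefl F g a Hi Hra').
        eapply t_trans; eauto. }
    destruct Hor as [y [z [Hyz [Hyr Hanc]]]].
    assert (HH : S_nbr H F S0 x y /\ S_nbr H F S0 x z /\ y <> z /\ ~ f_neq F y z /\
                 f_lab F y C /\ f_lab F z C /\ gpi g y = gpi g z).
    { destruct Hyz as [[-> ->]|[-> ->]]; repeat split; auto. }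
    destruct HH as (h1 & h2 & h3 & h4 & h5 & h6 & h7).
    exists (le_forest F x y z), g.
    destruct (le_step F g x S0 y z Hi Hib Hxd h1 h2 h3 h4 Hyr Hanc h7) as [k1 k2].
    split; auto. apply (r_le TN H F x n S0 C y z); auto; rewrite Hroot; auto.
Qed.


Lemma step_exists : forall F g F'', Invt F g -> rule_step TN H F F'' ->
  exists F' g', rule_step TN H F F' /\ Invt F' g' /\ Rk Kv (mv F' g') (mv F g).
Proof.
  intros F g F'' Hi Hs.
  assert (Hroot := iv_root _ _ Hi).
  destruct Hs as [x C1 C2 hl hib hn
                 | x C1 C2 D hl hib hn1 hn2 hD
                 | x S0 C y hl hnb hnex hfr
                 | x S0 C y hl hib hn hnot
                 | x S0 C R y hl hib htr hsub hn hnot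
                 | x n S0 C y D hl hib hn hn1 hn2 hD
                 | x n S0 C ys hl hnb hnot hlen hnd hfr
                 | x n S0 C y z hl hib hcard hny hnz hyz hneq hry hanc hly hlz
                 | x n S0 C y z hl hcard hny hnz hyz hry hrz hly hlz hneq].
  -
    destruct (iv_lab _ _ Hi _ _ hl) as [Hx HL].
    exists (add_labels F x (fun D => D = C1 \/ D = C2)), g.
    destruct (label_step F g x (fun D => D = C1 \/ D = C2) Hi Hx) as [k1 k2]; auto.
    + eapply lab_notdead; eauto.
    + intros D [-> | ->]; apply (tP2 _ _ _ HL).
    + apply nib_unmerged; auto.
    + destruct (classic (f_lab F x C1)); [exists C2| exists C1]; auto.
    + split; [apply r_and; auto| auto].
  -
    destruct (iv_lab _ _ Hi _ _ hl) as [Hx HL].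
    assert (HD' : exists D', (D' = C1 \/ D' = C2) /\ L (gpi g x) D').
    { destruct (tP3 _ _ _ HL); [exists C1| exists C2]; auto. }
    destruct HD' as [D' [hD' hL']].
    exists (add_label F x D'), g.
    destruct (label_step F g x (fun E => E = D') Hi Hx) as [k1 k2]; auto.
    + eapply lab_notdead; eauto.
    + intros E0 ->; auto.
    + apply nib_unmerged; auto.
    + exists D'. split; auto. destruct hD' as [->| ->]; auto.
    + split; [eapply r_or; eauto| auto].
  -
    destruct (iv_lab _ _ Hi _ _ hl) as [Hx HL].
    destruct (tP5 _ _ _ HL) as [t [ht1 ht2]].
    set (base := fresh_base (gns g)).
    assert (Hbase : forall w, In w (gns g) -> w < base) by (intros; apply fresh_base_ok; auto).
    exists (new_succs F x (seq base 1) S0 C false), (gen_ghost g x base 1 [t]).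
    destruct (gen_step F g x S0 C base 1 [t] false (CEx S0 C) Hi Hx hnb Hbase eq_refl) as [k1 k2];
      auto.
    + intros t' [<-|[]]; auto.
    + intros; discriminate.
    + intros [_ hf]. apply hnex. exact hf.
    + split; [simpl; auto|]. exists base. split; [|simpl; auto].
      left. exists S0. split; [simpl; auto| apply rt_refl].
    + split; auto. apply r_ex; auto. unfold fresh. rewrite (iv_node _ _ Hi).
      intros h. apply Hbase in h. lia.
  -
    destruct (iv_lab _ _ Hi _ _ hl) as [Hx HL].
    assert (Hra : in_RA H A S0) by (eapply L_inRA; [exact HL| simpl; auto]).
    exists (add_label F y C), g.
    destruct (nbr_nodes _ _ _ _ _ Hi hn) as [_ Hy].
    destruct (label_step F g y (fun E => E = C) Hi Hy) as [k1 k2]; auto.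
    + eapply nbr_notdead; eauto.
    + intros E0 ->. eapply tP4; eauto. eapply nbrE; eauto.
    + eapply nbr_unmerged; eauto.
    + exists C; auto.
    + split; [eapply r_all; eauto| auto].
  -
    destruct (iv_lab _ _ Hi _ _ hl) as [Hx HL].
    assert (Hra : in_RA H A S0) by (eapply L_inRA; [exact HL| simpl; auto]).
    assert (HraR : in_RA H A R) by (eapply sub_role_inRA; eauto).
    exists (add_label F y (CAll R C)), g.
    destruct (nbr_nodes _ _ _ _ _ Hi hn) as [_ Hy].
    destruct (label_step F g y (fun E => E = CAll R C) Hi Hy) as [k1 k2]; auto.
    + eapply nbr_notdead; eauto.
    + intros E0 ->. eapply tP6; eauto. eapply nbrE; eauto.
    + eapply nbr_unmerged; eauto.
    + exists (CAll R C); auto.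
    + split; [eapply r_allplus; eauto| auto].
  -
    assert (HL : L (gpi g x) (CAtMost n S0 C) \/ L (gpi g x) (CAtLeast n S0 C)).
    { destruct hl as [h|h]; apply (iv_lab _ _ Hi) in h; tauto. }
    assert (Hra : in_RA H A S0).
    { destruct HL as [h|h]; (eapply L_inRA; [exact h| simpl; auto]). }
    pose proof (tP11 _ _ _ _ _ HL (nbrE _ _ _ _ _ Hi hn Hra)) as Hch.
    assert (HD' : exists D', (D' = C \/ D' = nnf_neg C) /\ L (gpi g y) D').
    { destruct Hch; [exists C| exists (nnf_neg C)]; auto. }
    destruct HD' as [D' [hD' hL']].
    exists (add_label F y D'), g.
    destruct (nbr_nodes _ _ _ _ _ Hi hn) as [_ Hy].
    destruct (label_step F g y (fun E => E = D') Hi Hy) as [k1 k2]; auto.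
    + eapply nbr_notdead; eauto.
    + intros E0 ->; auto.
    + eapply nbr_unmerged; eauto.
    + exists D'. split; auto. destruct hD' as [->| ->]; auto.
    + split; [eapply r_choose; eauto| auto].
  -
    destruct (iv_lab _ _ Hi _ _ hl) as [Hx HL].
    destruct (tP10 _ _ _ _ HL) as [ts [hts [hndt hallt]]].
    set (base := fresh_base (gns g)).
    assert (Hbase : forall w, In w (gns g) -> w < base) by (intros; apply fresh_base_ok; auto).
    exists (new_succs F x (seq base n) S0 C true), (gen_ghost g x base n ts).
    destruct (gen_step F g x S0 C base n ts true (CAtLeast n S0 C) Hi Hx hnb Hbase hts) as [k1 k2];
      auto.
    + intros [_ hf]. apply hnot. exact hf.
    + split; [simpl; auto|]. exists (seq base n). split; [apply length_seq|]. split.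
      * apply FOP_of_nodup; [apply seq_NoDup|]. intros u v hu hv huv. simpl. right. auto.
      * intros w hw. split; [|simpl; auto]. left. exists S0. split; [simpl; auto| apply rt_refl].
    + split; auto. apply (r_ge TN H F x n S0 C (seq base n)); auto.
      * apply length_seq.
      * apply seq_NoDup.
      * intros w hw. unfold fresh. rewrite (iv_node _ _ Hi). intros h. apply Hbase in h.
        apply in_seq in hw. lia.
  -
    eapply merge_exists; eauto.
  -
    eapply merge_exists; eauto.
    apply root_not_ib with (g := g); auto.
    eapply (root_of_two_roots F g S0 x y z); eauto; rewrite <- Hroot; auto.
Qed.

Lemma main_run : forall p : forest * ghostT, Invt (fst p) (snd p) ->
  exists F', alg_run TN H (fst p) F' /\ complete TN H F' /\ clash_free H F'.
Proof.
  intros p. pattern p.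
  apply (well_founded_induction
           (wf_inverse_image _ _ (Rk Kv) (fun q : forest * ghostT => mv (fst q) (snd q)) (Rk_wf Kv))).
  clear p. intros [F g] IH Hi. simpl in *.
  destruct (classic (complete TN H F)) as [Hc|Hc].
  - exists F. split; [apply rt_refl|]. split; auto. eapply inv_clash_free; eauto.
  - unfold complete in Hc. apply NNPP in Hc. destruct Hc as [F'' Hs].
    destruct (step_exists F g F'' Hi Hs) as [F' [g' [Hs' [Hi' Hr]]]].
    destruct (IH (F', g') Hr Hi') as [Ff [Hrun [Hcomp Hcf]]].
    exists Ff. split; auto. eapply rt_trans; [apply rt_step| exact Hrun].
    split; auto. eapply inv_clash_free; eauto.
Qed.

Lemma final_sec : exists F, alg_run TN H (init_forest A) F /\ complete TN H F /\ clash_free H F.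
Proof. apply (main_run (init_forest A, g0)). apply init_inv. Qed.

End Main.

Theorem lemma10 (TN : nat -> Prop) (H : role_hierarchy) (A : abox) :
  abox_nnf A -> abox_shiq TN H A ->
  has_tableau TN H A ->
  exists F : forest,
    alg_run TN H (init_forest A) F /\ complete TN H F /\ clash_free H F.
Proof.
  intros Hn _ [Sx [L [E [I hT]]]].
  exact (final_sec TN H A Hn Sx L E I hT).
Qed.
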